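(* For $\boldsymbol\ell\in\{0,\dots,N-1\}^d$ let $$\psi_{\boldsymbol\ell}=\frac1{\sqrt{\|G_{\boldsymbol\ell}\|_1}}\sum_{\mathbf{m}\in\mathbb{Z}^d}G[\mathbf{m}N+\boldsymbol\ell]\,\phi_{\mathbf{m}N+\boldsymbol\ell}.$$ Then $\mathcal{T}_K^{N,d}\psi_{\boldsymbol\ell}=\|G_{\boldsymbol\ell}\|_1\psi_{\boldsymbol\ell}$, $\|\psi_{\boldsymbol\ell}\|_{\mathcal{H}}=1$, $\|\psi_{\boldsymbol\ell}\|=\frac{\|G_{\boldsymbol\ell}\|}{\sqrt{\|G_{\boldsymbol\ell}\|_1}}$, and $\langle\psi_{\boldsymbol\ell},\psi_{\mathbf{k}}\rangle=0$ for $\mathbf{k}\ne\boldsymbol\ell$.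
   Context: Let $\mathbb{T}=[-\pi,\pi)$, $j=\sqrt{-1}$, $\phi_{\mathbf{k}}(\mathbf{x})=e^{j\langle\mathbf{k},\mathbf{x}\rangle}$ for $\mathbf{k}\in\mathbb{Z}^d$, $\mu$ uniform probability measure on $\mathbb{T}^d$, $\langle\cdot,\cdot\rangle$ and $\|\cdot\|$ the $L^2_\mu$ inner product and norm. $K(\mathbf{x},\mathbf{x}')=g(M((\mathbf{x}-\mathbf{x}')\bmod\mathbb{T}^d))$ is a positive definite kernel with RKHS $\mathcal{H}$ (coordinatewise $\theta\bmod\mathbb{T}:=((\theta+\pi)\bmod2\pi)-\pi$), Fourier coefficients $G[\mathbf{k}]=(2\pi)^{-d}\int_{\mathbb{T}^d}g(M\boldsymbol\theta)e^{-j\langle\mathbf{k},\boldsymbol\theta\rangle}d\boldsymbol\theta\ge0$, $\sum G[\mathbf{k}]<\infty$, and $\|f\|_{\mathcal{H}}^2=\sum_{\mathbf{k}}|\langle f,\phi_{\mathbf{k}}\rangle|^2/G[\mathbf{k}]$. For even $N$, grid points $\mathbf{x}_{\mathbf{p}}$, $\mathbf{p}\in\{0,\dots,N-1\}^d$, $(\mathbf{x}_{\mathbf{p}})_i=\frac{2\pi}{N}p_i-\pi$, with invertible kernel matrix. $\mathcal{T}_K^{N,d}f(\mathbf{x})=N^{-d}\sum_{\mathbf{p}}K(\mathbf{x},\mathbf{x}_{\mathbf{p}})f(\mathbf{x}_{\mathbf{p}})$. $\|G_{\boldsymbol\ell}\|_1=\sum_{\mathbf{m}}|G[\mathbf{m}N+\boldsymbol\ell]|$,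 $\|G_{\boldsymbol\ell}\|^2=\sum_{\mathbf{m}}|G[\mathbf{m}N+\boldsymbol\ell]|^2$. *)

(* Defs.v *)
(* Conventions:
   - a point of R^d / T^d is a function  nat -> R  (only coordinates i < d matter);
   - a frequency in Z^d is a function  nat -> Z ; sums over Z^d only ever evaluate
     the summand at vectors vanishing at coordinates >= d;
   - a grid index p in {0..N-1}^d is a function  nat -> nat  with p i < N for i < d
     and p i = 0 for i >= d. *)
From Stdlib Require Import Reals Lra Lia.
From Coquelicot Require Import Coquelicot.
Open Scope R_scope.

Fixpoint rsum (n : nat) (f : nat -> R) : R :=
  match n with O => 0 | S n' => rsum n' f + f n' end.

Definition updR (x : nat -> R) (i : nat) (t : R) : nat -> R :=
  fun j => if Nat.eqb j i then t else x j.
Definition updZ (k : nat -> Z) (i : nat) (t : Z) : nat -> Z :=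
  fun j => if Nat.eqb j i then t else k j.
Definition updN (p : nat -> nat) (i : nat) (t : nat) : nat -> nat :=
  fun j => if Nat.eqb j i then t else p j.

Definition dotZ (d : nat) (k : nat -> Z) (x : nat -> R) : R :=
  rsum d (fun i => IZR (k i) * x i).

Definition cexpi (t : R) : C := (cos t, sin t).

Definition phi (d : nat) (k : nat -> Z) (x : nat -> R) : C := cexpi (dotZ d k x).

Fixpoint boxsum (d n : nat) (F : (nat -> Z) -> R) : R :=
  match d with
  | O => F (fun _ => 0%Z)
  | S d' => rsum (2 * n + 1)
              (fun i => boxsum d' n (fun k => F (updZ k d' (Z.of_nat i - Z.of_nat n)%Z)))
  end.

(* sum over Z^d (limit of the box partial sums; all series in the statement are
   absolutely convergent, so this is the unordered sum) *)
Definition RsumZd (d : nat) (F : (nat -> Z) -> R) : R :=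
  Lim_seq (fun n => boxsum d n F).
Definition CsumZd (d : nat) (F : (nat -> Z) -> C) : C :=
  (RsumZd d (fun k => Re (F k)), RsumZd d (fun k => Im (F k))).

(* integral w.r.t. the uniform probability measure mu on T^d = [-pi,pi)^d,
   written as an iterated (normalized) integral *)
Fixpoint tint (d : nat) (f : (nat -> R) -> R) : R :=
  match d with
  | O => f (fun _ => 0)
  | S d' => / (2 * PI) * RInt (fun t => tint d' (fun x => f (updR x d' t))) (- PI) PI
  end.
Definition Ctint (d : nat) (f : (nat -> R) -> C) : C :=
  (tint d (fun x => Re (f x)), tint d (fun x => Im (f x))).

Definition L2ip (d : nat) (f h : (nat -> R) -> C) : C :=
  Ctint d (fun x => Cmult (f x) (Cconj (h x))).
Definition L2norm (d : nat) (f : (nat -> R) -> C) : R :=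
  sqrt (tint d (fun x => (Cmod (f x)) ^ 2)).

(* RKHS norm  ||f||_H^2 = sum_k |<f,phi_k>|^2 / G[k]   (with x / 0 = 0) *)
Definition Hnorm (d : nat) (G : (nat -> Z) -> R) (f : (nat -> R) -> C) : R :=
  sqrt (RsumZd d (fun k => (Cmod (L2ip d f (phi d k))) ^ 2 / G k)).

Definition rmod (a b : R) : R := a - b * IZR (Int_part (a / b)).
Definition tmod (d : nat) (th : nat -> R) : nat -> R :=
  fun i => if Nat.ltb i d then rmod (th i + PI) (2 * PI) - PI else 0.

Definition matvec (d : nat) (M : nat -> nat -> R) (v : nat -> R) : nat -> R :=
  fun i => if Nat.ltb i d then rsum d (fun j => M i j * v j) else 0.

Definition kern (d : nat) (g : (nat -> R) -> R) (M : nat -> nat -> R)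
  (x y : nat -> R) : R :=
  g (matvec d M (tmod d (fun i => x i - y i))).

Definition in_torus (d : nat) (th : nat -> R) : Prop :=
  forall i, (i < d)%nat -> - PI <= th i < PI.

Definition in_grid (d N : nat) (p : nat -> nat) : Prop :=
  (forall i, (i < d)%nat -> (p i < N)%nat) /\ (forall i, (d <= i)%nat -> p i = 0%nat).
Definition gridpt (N : nat) (p : nat -> nat) : nat -> R :=
  fun i => 2 * PI / INR N * INR (p i) - PI.

Fixpoint gridsum (d N : nat) (F : (nat -> nat) -> R) : R :=
  match d with
  | O => F (fun _ => 0%nat)
  | S d' => rsum N (fun t => gridsum d' N (fun p => F (updN p d' t)))
  end.
Definition Cgridsum (d N : nat) (F : (nat -> nat) -> C) : C :=
  (gridsum d N (fun p => Re (F p)), gridsum d N (fun p => Im (F p))).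

(* the kernel matrix [K(x_p, x_q)]_{p,q} is invertible (square matrix: trivial kernel) *)
Definition kernel_matrix_invertible (d N : nat) (K : (nat -> R) -> (nat -> R) -> R) : Prop :=
  forall c : (nat -> nat) -> R,
    (forall p, in_grid d N p ->
       gridsum d N (fun q => K (gridpt N p) (gridpt N q) * c q) = 0) ->
    forall p, in_grid d N p -> c p = 0.

Definition TK (d N : nat) (K : (nat -> R) -> (nat -> R) -> R)
  (f : (nat -> R) -> C) (x : nat -> R) : C :=
  Cmult (RtoC (/ (INR N ^ d)))
        (Cgridsum d N (fun p => Cmult (RtoC (K x (gridpt N p))) (f (gridpt N p)))).

Definition mNl (N : nat) (m : nat -> Z) (l : nat -> nat) : nat -> Z :=
  fun i => (m i * Z.of_nat N + Z.of_nat (l i))%Z.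

Definition Gl1 (d N : nat) (G : (nat -> Z) -> R) (l : nat -> nat) : R :=
  RsumZd d (fun m => Rabs (G (mNl N m l))).
Definition Gl2 (d N : nat) (G : (nat -> Z) -> R) (l : nat -> nat) : R :=
  sqrt (RsumZd d (fun m => (Rabs (G (mNl N m l))) ^ 2)).

Definition psi (d N : nat) (G : (nat -> Z) -> R) (l : nat -> nat) (x : nat -> R) : C :=
  Cmult (RtoC (/ sqrt (Gl1 d N G l)))
        (CsumZd d (fun m => Cmult (RtoC (G (mNl N m l))) (phi d (mNl N m l) x))).

(* Main.v *)
Require Import Defs.
From Stdlib Require Import Reals.
From Stdlib Require Import Lra Lia ZArith FunctionalExtensionality Classical_Prop.
From Coquelicot Require Import Coquelicot.
Open Scope R_scope.

Lemma rsum_ext n f g : (forall i, (i < n)%nat -> f i = g i) -> rsum n f = rsum n g.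
Proof. induction n; simpl; intros H; auto. rewrite IHn by (intros; apply H; lia). rewrite H by lia; auto. Qed.

Lemma rsum_plus n f g : rsum n (fun i => f i + g i) = rsum n f + rsum n g.
Proof. induction n; simpl; [lra|]. rewrite IHn; lra. Qed.

Lemma rsum_scal n a f : rsum n (fun i => a * f i) = a * rsum n f.
Proof. induction n; simpl; [lra|]. rewrite IHn; lra. Qed.

Lemma rsum_const0 n : rsum n (fun _ => 0) = 0.
Proof. induction n; simpl; lra. Qed.

Lemma rsum_le n f g : (forall i, (i < n)%nat -> f i <= g i) -> rsum n f <= rsum n g.
Proof. induction n; simpl; intros H; [lra|]. assert (f n <= g n) by (apply H; lia).
  assert (rsum n f <= rsum n g) by (apply IHn; intros; apply H; lia). lra. Qed.

Lemma rsum_nonneg n f : (forall i, (i < n)%nat -> 0 <= f i) -> 0 <= rsum n f.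
Proof. intros H. rewrite <- (rsum_const0 n). apply rsum_le; auto. Qed.

Lemma rsum_abs n f g : (forall i, (i < n)%nat -> Rabs (f i) <= g i) -> Rabs (rsum n f) <= rsum n g.
Proof. induction n; simpl; intros H. rewrite Rabs_R0; lra.
  eapply Rle_trans; [apply Rabs_triang|]. assert (Rabs (f n) <= g n) by (apply H; lia).
  assert (Rabs (rsum n f) <= rsum n g) by (apply IHn; intros; apply H; lia). lra. Qed.

Lemma rsum_split a b f : rsum (a + b) f = rsum a f + rsum b (fun i => f (a + i)%nat).
Proof. induction b; simpl. rewrite Nat.add_0_r; lra. rewrite Nat.add_succ_r; simpl. rewrite IHb; lra. Qed.

Lemma rsum_shift1 n f : rsum (S n) f = f O + rsum n (fun i => f (S i)).
Proof. rewrite <- (Nat.add_1_l n) at 1. rewrite rsum_split. simpl. lra. Qed.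

Lemma rsum_block q N f : rsum (q * N) f = rsum q (fun j => rsum N (fun r => f (j * N + r)%nat)).
Proof. induction q; simpl; auto. rewrite Nat.add_comm, rsum_split, IHq. auto. Qed.

Lemma rsum_delta n i0 c : (i0 < n)%nat -> rsum n (fun i => if Nat.eqb i i0 then c else 0) = c.
Proof. induction n; intros H; [lia|]. simpl. destruct (Nat.eqb_spec n i0).
  - subst. rewrite (rsum_ext _ _ (fun _ => 0)). rewrite rsum_const0; lra.
    intros i Hi. destruct (Nat.eqb_spec i i0); [lia|auto].
  - rewrite IHn by lia. lra. Qed.

Lemma rsum_swap n m (F : nat -> nat -> R) : rsum n (fun i => rsum m (fun j => F i j)) = rsum m (fun j => rsum n (fun i => F i j)).
Proof. induction n; simpl. rewrite rsum_const0; auto. rewrite IHn, <- rsum_plus. auto. Qed.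

Lemma rsum_mono_len n m f : (n <= m)%nat -> (forall i, (i < m)%nat -> 0 <= f i) -> rsum n f <= rsum m f.
Proof. intros H Hf. replace m with (n + (m - n))%nat by lia. rewrite rsum_split.
  assert (0 <= rsum (m - n) (fun i => f (n + i)%nat)) by (apply rsum_nonneg; intros; apply Hf; lia). lra. Qed.

Lemma rsum_S n f : rsum (S n) f = rsum n f + f n.
Proof. reflexivity. Qed.

Lemma boxsum_S d n F : boxsum (S d) n F = rsum (2 * n + 1)
  (fun i => boxsum d n (fun k => F (updZ k d (Z.of_nat i - Z.of_nat n)%Z))).
Proof. reflexivity. Qed.

Lemma boxsum_plus d n F H : boxsum d n (fun k => F k + H k) = boxsum d n F + boxsum d n H.
Proof. revert F H; induction d; intros; simpl; auto. rewrite <- rsum_plus. apply rsum_ext; intros; apply IHd. Qed.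

Lemma boxsum_scal d n a F : boxsum d n (fun k => a * F k) = a * boxsum d n F.
Proof. revert F; induction d; intros; simpl; auto. rewrite <- rsum_scal. apply rsum_ext; intros; apply IHd. Qed.

Lemma boxsum_le d n F H : (forall k, F k <= H k) -> boxsum d n F <= boxsum d n H.
Proof. revert F H; induction d; intros F H HH; simpl; auto. apply rsum_le; intros; apply IHd; auto. Qed.

Lemma boxsum_const0 d n : boxsum d n (fun _ => 0) = 0.
Proof. induction d; simpl; auto. rewrite (rsum_ext _ _ (fun _ => 0)). apply rsum_const0. intros; apply IHd. Qed.

Lemma boxsum_nonneg d n F : (forall k, 0 <= F k) -> 0 <= boxsum d n F.
Proof. intros. rewrite <- (boxsum_const0 d n). apply boxsum_le; auto. Qed.

Lemma boxsum_abs d n F A : (forall k, Rabs (F k) <= A k) -> Rabs (boxsum d n F) <= boxsum d n A.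
Proof. revert F A; induction d; intros F A HH; simpl; auto. apply rsum_abs; intros; apply IHd; auto. Qed.

Definition zbeyond (d : nat) (k : nat -> Z) := forall i, (d <= i)%nat -> k i = 0%Z.

Lemma updZ_same k i t : updZ k i t i = t.
Proof. unfold updZ. rewrite Nat.eqb_refl. auto. Qed.
Lemma updZ_other k i t j : j <> i -> updZ k i t j = k j.
Proof. unfold updZ. intros. destruct (Nat.eqb_spec j i); [lia|auto]. Qed.

Lemma boxsum_ext_loc d n F H : (forall k, zbeyond d k -> F k = H k) -> boxsum d n F = boxsum d n H.
Proof. revert F H; induction d; intros F H HH; simpl.
  - apply HH. intros i _; auto.
  - apply rsum_ext; intros; apply IHd. intros k Hk. apply HH. intros j Hj.
    rewrite updZ_other by lia. apply Hk; lia. Qed.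

Lemma rsum_ends n (h : Z -> R) :
  rsum (2 * S n + 1) (fun i => h (Z.of_nat i - Z.of_nat (S n))%Z) =
  h (- Z.of_nat (S n))%Z + rsum (2 * n + 1) (fun i => h (Z.of_nat i - Z.of_nat n)%Z) + h (Z.of_nat (S n)).
Proof. replace (2 * S n + 1)%nat with (S (S (2 * n + 1))) by lia. rewrite rsum_shift1.
  rewrite rsum_S. rewrite (rsum_ext _ (fun i => h (Z.of_nat (S i) - Z.of_nat (S n))%Z) (fun i => h (Z.of_nat i - Z.of_nat n)%Z)).
  replace (Z.of_nat 0 - Z.of_nat (S n))%Z with (- Z.of_nat (S n))%Z by lia.
  replace (Z.of_nat (S (2 * n + 1)) - Z.of_nat (S n))%Z with (Z.of_nat (S n)) by lia. lra.
  intros; f_equal; lia. Qed.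

Lemma boxsum_mono d n F : (forall k, 0 <= F k) -> boxsum d n F <= boxsum d (S n) F.
Proof. revert F; induction d; intros F HF; [simpl; lra|]. rewrite !boxsum_S.
  rewrite (rsum_ends n (fun v => boxsum d (S n) (fun k => F (updZ k d v)))).
  match goal with |- _ <= ?a + ?b + ?c => assert (0 <= a) by (apply boxsum_nonneg; auto);
     assert (0 <= c) by (apply boxsum_nonneg; auto) end.
  assert (rsum (2 * n + 1) (fun i => boxsum d n (fun k => F (updZ k d (Z.of_nat i - Z.of_nat n)))) <=
    rsum (2 * n + 1) (fun i => boxsum d (S n) (fun k => F (updZ k d (Z.of_nat i - Z.of_nat n))))).
  { apply rsum_le; intros; apply IHd; auto. }
  lra. Qed.

Lemma boxsum_mono_le d n m F : (forall k, 0 <= F k) -> (n <= m)%nat -> boxsum d n F <= boxsum d m F.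
Proof. intros HF H. induction H; [lra|]. eapply Rle_trans; [apply IHle|]. apply boxsum_mono; auto. Qed.

Fixpoint cube (d : nat) (a : Z) (L : nat) (F : (nat -> Z) -> R) : R :=
  match d with
  | O => F (fun _ => 0%Z)
  | S d' => rsum L (fun i => cube d' a L (fun k => F (updZ k d' (a + Z.of_nat i)%Z)))
  end.

Lemma boxsum_cube d n F : boxsum d n F = cube d (- Z.of_nat n) (2 * n + 1) F.
Proof. revert F; induction d; intros; simpl; auto. apply rsum_ext; intros. rewrite IHd.
  do 3 f_equal. apply functional_extensionality; intros k. f_equal. f_equal. lia. Qed.

Lemma cube_le d a L F H : (forall k, F k <= H k) -> cube d a L F <= cube d a L H.
Proof. revert F H; induction d; intros F H HH; simpl; auto. apply rsum_le; intros; apply IHd; auto. Qed.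

Lemma cube_nonneg d a L F : (forall k, 0 <= F k) -> 0 <= cube d a L F.
Proof. revert F; induction d; intros F HH; simpl; auto. apply rsum_nonneg; intros; apply IHd; auto. Qed.

Lemma cube_mono d a L a' L' F : (forall k, 0 <= F k) -> (a' <= a)%Z -> (a + Z.of_nat L <= a' + Z.of_nat L')%Z ->
  cube d a L F <= cube d a' L' F.
Proof. revert F; induction d; intros F HF H1 H2; simpl; [lra|].
  set (s := Z.to_nat (a - a')).
  assert (L' = s + L + (L' - s - L))%nat by lia.
  set (g := fun i => cube d a' L' (fun k => F (updZ k d (a' + Z.of_nat i)%Z))).
  rewrite H. rewrite !rsum_split. unfold g.
  assert (0 <= rsum s (fun i => cube d a' L' (fun k => F (updZ k d (a' + Z.of_nat i)%Z))))
    by (apply rsum_nonneg; intros; apply cube_nonneg; auto).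
  assert (0 <= rsum (L' - s - L) (fun i => cube d a' L' (fun k => F (updZ k d (a' + Z.of_nat (s + L + i))%Z))))
    by (apply rsum_nonneg; intros; apply cube_nonneg; auto).
  assert (rsum L (fun i => cube d a L (fun k => F (updZ k d (a + Z.of_nat i)%Z))) <=
          rsum L (fun i => cube d a' L' (fun k => F (updZ k d (a' + Z.of_nat (s + i))%Z)))).
  { apply rsum_le; intros. replace (fun k => F (updZ k d (a' + Z.of_nat (s + i))%Z)) with
      (fun k => F (updZ k d (a + Z.of_nat i)%Z)). apply IHd; auto.
    apply functional_extensionality; intros; do 2 f_equal. lia. }
  lra. Qed.

Fixpoint congb (d N : nat) (l : nat -> nat) (k : nat -> Z) : bool :=
  match d with
  | O => true
  | S d' => congb d' N l k && Z.eqb ((k d' - Z.of_nat (l d')) mod Z.of_nat N) 0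
  end.

Definition mNd (d N : nat) (m : nat -> Z) (l : nat -> nat) : nat -> Z :=
  fun i => if Nat.ltb i d then (m i * Z.of_nat N + Z.of_nat (l i))%Z else m i.

Lemma congb_upd d N l k j v : (d <= j)%nat -> congb d N l (updZ k j v) = congb d N l k.
Proof. induction d; simpl; intros; auto. rewrite IHd by lia. rewrite updZ_other by lia. auto. Qed.

Lemma mod_test N r l j : (0 < N)%nat -> (r < N)%nat -> (l < N)%nat ->
  Z.eqb ((Z.of_nat r + j * Z.of_nat N - Z.of_nat l) mod Z.of_nat N) 0 = Nat.eqb r l.
Proof. intros HN Hr Hl.
  replace (Z.of_nat r + j * Z.of_nat N - Z.of_nat l)%Z with ((Z.of_nat r - Z.of_nat l) + j * Z.of_nat N)%Z by ring.
  rewrite Z.mod_add by lia.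
  destruct (le_lt_dec l r).
  - rewrite Z.mod_small by lia. destruct (Nat.eqb_spec r l); apply Z.eqb_eq || apply Z.eqb_neq; lia.
  - replace (Z.of_nat r - Z.of_nat l)%Z with ((Z.of_nat r - Z.of_nat l + Z.of_nat N) + (-1) * Z.of_nat N)%Z by ring.
    rewrite Z.mod_add by lia. rewrite Z.mod_small by lia.
    destruct (Nat.eqb_spec r l); [lia|]. apply Z.eqb_neq; lia. Qed.

Lemma cube_const0 d a L : cube d a L (fun _ => 0) = 0.
Proof. induction d; simpl; auto. rewrite (rsum_ext _ _ (fun _ => 0)). apply rsum_const0. intros; apply IHd. Qed.

Lemma cube_S d a L F : cube (S d) a L F = rsum L (fun i => cube d a L (fun k => F (updZ k d (a + Z.of_nat i)%Z))).
Proof. reflexivity. Qed.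

Lemma block_lemma d N n l F : (0 < N)%nat -> (forall i, (i < d)%nat -> (l i < N)%nat) ->
  cube d (- Z.of_nat n * Z.of_nat N)%Z ((2 * n + 1) * N) (fun k => if congb d N l k then F k else 0)
  = boxsum d n (fun m => F (mNd d N m l)).
Proof. intros HN; revert F; induction d; intros F Hl; [simpl; auto|].
  rewrite cube_S, boxsum_S. rewrite rsum_block. apply rsum_ext; intros j Hj.
  rewrite (rsum_ext _ _ (fun r => if Nat.eqb r (l d) then
     boxsum d n (fun m => F (updZ (mNd d N m l) d ((Z.of_nat j - Z.of_nat n) * Z.of_nat N + Z.of_nat (l d))%Z)) else 0)).
  - rewrite rsum_delta by (apply Hl; lia). apply boxsum_ext_loc. intros m _. f_equal.
    apply functional_extensionality; intros i. unfold mNd, updZ.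
    destruct (Nat.eqb_spec i d).
    + subst. replace (Nat.ltb d (S d)) with true by (symmetry; apply Nat.ltb_lt; lia). auto.
    + destruct (Nat.ltb_spec i d); destruct (Nat.ltb_spec i (S d)); auto; lia.
  - intros r Hr. simpl congb.
    set (v := (- Z.of_nat n * Z.of_nat N + Z.of_nat (j * N + r))%Z).
    assert (Ht : ((v - Z.of_nat (l d)) mod Z.of_nat N =? 0)%Z = (r =? l d)).
    { rewrite <- (mod_test N r (l d) (Z.of_nat j - Z.of_nat n)) by auto. f_equal. f_equal. unfold v. lia. }
    replace (fun k : nat -> Z => if (congb d N l (updZ k d v) && ((updZ k d v d - Z.of_nat (l d)) mod Z.of_nat N =? 0)%Z)%bool
       then F (updZ k d v) else 0) with
      (fun k => if (r =? l d) then (if congb d N l k then F (updZ k d v) else 0) else 0).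
    2:{ apply functional_extensionality; intros k. rewrite congb_upd, updZ_same, Ht by lia.
        destruct (r =? l d), (congb d N l k); auto. }
    destruct (Nat.eqb_spec r (l d)).
    + rewrite (IHd (fun k => F (updZ k d v))) by (intros; apply Hl; lia).
      apply boxsum_ext_loc; intros m _. do 2 f_equal. unfold v. subst r. lia.
    + apply cube_const0.
Qed.

Lemma RsumZd_is d F (L : R) : is_lim_seq (fun n => boxsum d n F) L -> RsumZd d F = L.
Proof. intros H. unfold RsumZd. rewrite (is_lim_seq_unique _ _ H). auto. Qed.

Lemma mNd_mNl d N m l : in_grid d N l -> zbeyond d m -> mNd d N m l = mNl N m l.
Proof. intros [_ Hl] Hm. apply functional_extensionality; intros i. unfold mNd, mNl.
  destruct (Nat.ltb_spec i d); auto. rewrite Hm, Hl by lia. lia. Qed.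

Lemma reindex_nonneg d N l F B : in_grid d N l -> (forall k, 0 <= F k) ->
  (forall n, boxsum d n (fun k => if congb d N l k then F k else 0) <= B) ->
  exists L : R, is_lim_seq (fun n => boxsum d n (fun k => if congb d N l k then F k else 0)) L /\
    is_lim_seq (fun n => boxsum d n (fun m => F (mNl N m l))) L.
Proof. intros Hg HF HB. destruct d as [|d'].
  - exists (F (fun _ => 0%Z)). simpl. split; [apply is_lim_seq_const|].
    replace (mNl N (fun _ => 0%Z) l) with (fun _ : nat => 0%Z). apply is_lim_seq_const.
    apply functional_extensionality; intros i. unfold mNl. destruct Hg as [_ Hl]. rewrite Hl by lia. lia.
  - assert (HN : (0 < N)%nat) by (destruct Hg as [Hl _]; specialize (Hl O); lia).
    set (d := S d') in *.
    set (P := fun n => boxsum d n (fun k => if congb d N l k then F k else 0)).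
    assert (HP0 : forall k, 0 <= (if congb d N l k then F k else 0)) by (intros; destruct congb; auto; lra).
    assert (Hinc : forall n, P n <= P (S n)) by (intros; apply boxsum_mono; auto).
    destruct (ex_finite_lim_seq_incr P B Hinc HB) as [L HL].
    exists L. split; auto.
    assert (HQ : forall n, boxsum d n (fun m => F (mNl N m l)) =
       cube d (- Z.of_nat n * Z.of_nat N)%Z ((2 * n + 1) * N) (fun k => if congb d N l k then F k else 0)).
    { intros n. rewrite block_lemma by (auto; apply Hg). apply boxsum_ext_loc. intros m Hm. rewrite mNd_mNl; auto. }
    apply is_lim_seq_le_le with (u := fun n => P (n * N)%nat) (w := fun n => P (n * N + N)%nat).
    + intros n. rewrite HQ. unfold P. rewrite !boxsum_cube. split; apply cube_mono; auto; rewrite ?Nat2Z.inj_add, ?Nat2Z.inj_mul; lia.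
    + apply (is_lim_seq_subseq P L (fun n => n * N)%nat); auto. apply eventually_subseq; intros; nia.
    + apply (is_lim_seq_subseq P L (fun n => n * N + N)%nat); auto. apply eventually_subseq; intros; nia.
Qed.

Lemma lim_le_real (u v : nat -> R) (a b : R) : (forall n, u n <= v n) -> is_lim_seq u a -> is_lim_seq v b -> a <= b.
Proof. intros H Hu Hv. pose proof (is_lim_seq_le u v a b H Hu Hv). simpl in H0. auto. Qed.

Lemma incr_le_lim (u : nat -> R) (L : R) : (forall n m, (n <= m)%nat -> u n <= u m) -> is_lim_seq u L -> forall n, u n <= L.
Proof. intros Hm HL n. apply (lim_le_real (fun _ => u n) (fun m => u (m + n)%nat)).
  intros; apply Hm; lia. apply is_lim_seq_const. apply (is_lim_seq_incr_n u n L). auto. Qed.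

Lemma tail_bound (a b : nat -> R) (La Lb : R) : (forall n m, (n <= m)%nat -> Rabs (a m - a n) <= b m - b n) ->
  is_lim_seq a La -> is_lim_seq b Lb -> forall n, Rabs (a n - La) <= Lb - b n.
Proof. intros H Ha Hb n. rewrite Rabs_minus_sym.
  apply (lim_le_real (fun m => Rabs (a (m + n)%nat - a n)) (fun m => b (m + n)%nat - b n)).
  intros; apply H; lia.
  apply (is_lim_seq_abs _ (La - a n)). apply is_lim_seq_minus'. apply (is_lim_seq_incr_n a n La); auto. apply is_lim_seq_const.
  apply is_lim_seq_minus'. apply (is_lim_seq_incr_n b n Lb); auto. apply is_lim_seq_const. Qed.

Lemma boxsum_minus d n F H : boxsum d n (fun k => F k - H k) = boxsum d n F - boxsum d n H.
Proof. rewrite (boxsum_ext_loc d n _ (fun k => F k + (-1) * H k)) by (intros; ring).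
  rewrite boxsum_plus, boxsum_scal. ring. Qed.

Lemma dom_diff d F A : (forall k, Rabs (F k) <= A k) -> forall n m, (n <= m)%nat ->
  Rabs (boxsum d m F - boxsum d n F) <= boxsum d m A - boxsum d n A.
Proof. intros HFA n m Hnm.
  assert (Hp : forall k, 0 <= A k + F k) by (intros k; specialize (HFA k); apply Rabs_le_between in HFA; lra).
  assert (Hm : forall k, 0 <= A k - F k) by (intros k; specialize (HFA k); apply Rabs_le_between in HFA; lra).
  pose proof (boxsum_mono_le d n m _ Hp Hnm). pose proof (boxsum_mono_le d n m _ Hm Hnm).
  rewrite !boxsum_plus in H. rewrite !boxsum_minus in H0. apply Rabs_le_between. lra. Qed.

Lemma dom_conv d F A (LA : R) : (forall k, Rabs (F k) <= A k) -> is_lim_seq (fun n => boxsum d n A) LA ->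
  exists L : R, is_lim_seq (fun n => boxsum d n F) L /\
     forall n, Rabs (boxsum d n F - L) <= LA - boxsum d n A.
Proof. intros HFA HA.
  assert (A0 : forall k, 0 <= A k) by (intros k; specialize (HFA k); pose proof (Rabs_pos (F k)); lra).
  assert (Hp : forall k, 0 <= A k + F k) by (intros k; specialize (HFA k); apply Rabs_le_between in HFA; lra).
  assert (HAle : forall n, boxsum d n A <= LA).
  { apply incr_le_lim; auto. intros; apply boxsum_mono_le; auto. }
  assert (HFle : forall n, boxsum d n F <= boxsum d n A).
  { intros; apply boxsum_le; intros k; specialize (HFA k); apply Rabs_le_between in HFA; lra. }
  destruct (ex_finite_lim_seq_incr (fun n => boxsum d n (fun k => A k + F k)) (2 * LA)) as [Lu Hu].
  { intros; apply boxsum_mono; auto. }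
  { intros n. rewrite boxsum_plus. pose proof (HAle n). pose proof (HFle n). lra. }
  exists (Lu - LA).
  assert (HL : is_lim_seq (fun n => boxsum d n F) (Lu - LA)).
  { apply (is_lim_seq_ext (fun n => boxsum d n (fun k => A k + F k) - boxsum d n A)).
    intros; rewrite boxsum_plus; ring. apply is_lim_seq_minus'; auto. }
  split; auto. apply tail_bound; auto. apply dom_diff; auto. Qed.

Lemma dom_conv_ex d F A : (forall k, Rabs (F k) <= A k) -> ex_finite_lim_seq (fun n => boxsum d n A) ->
  is_lim_seq (fun n => boxsum d n F) (RsumZd d F).
Proof. intros H [LA HA]. destruct (dom_conv d F A LA H HA) as [L [HL _]]. rewrite (RsumZd_is _ _ _ HL). auto. Qed.

Lemma reindex d N l F A (LA : R) : in_grid d N l -> (forall k, Rabs (F k) <= A k) ->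
  is_lim_seq (fun n => boxsum d n A) LA ->
  exists L : R, is_lim_seq (fun n => boxsum d n (fun k => if congb d N l k then F k else 0)) L /\
    is_lim_seq (fun n => boxsum d n (fun m => F (mNl N m l))) L.
Proof. intros Hg HFA HA.
  assert (A0 : forall k, 0 <= A k) by (intros k; specialize (HFA k); pose proof (Rabs_pos (F k)); lra).
  assert (Hp : forall k, 0 <= A k + F k) by (intros k; specialize (HFA k); apply Rabs_le_between in HFA; lra).
  assert (HAle : forall n, boxsum d n A <= LA).
  { apply incr_le_lim; auto. intros; apply boxsum_mono_le; auto. }
  destruct (reindex_nonneg d N l A LA Hg A0) as [L1 [H1 H1']].
  { intros n. eapply Rle_trans; [|apply (HAle n)]. apply boxsum_le. intros; destruct congb; auto; lra. }
  destruct (reindex_nonneg d N l (fun k => A k + F k) (2 * LA) Hg Hp) as [L2 [H2 H2']].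
  { intros n. eapply Rle_trans with (boxsum d n (fun k => 2 * A k)). apply boxsum_le. intros k.
    specialize (HFA k); apply Rabs_le_between in HFA. destruct congb; lra.
    rewrite boxsum_scal. pose proof (HAle n). lra. }
  exists (L2 - L1). split.
  - apply (is_lim_seq_ext (fun n => boxsum d n (fun k => if congb d N l k then A k + F k else 0) -
       boxsum d n (fun k => if congb d N l k then A k else 0))).
    intros n. rewrite <- boxsum_minus. apply boxsum_ext_loc; intros; destruct congb; ring.
    apply is_lim_seq_minus'; auto.
  - apply (is_lim_seq_ext (fun n => boxsum d n (fun m => A (mNl N m l) + F (mNl N m l)) -
       boxsum d n (fun m => A (mNl N m l)))).
    intros n. rewrite <- boxsum_minus. apply boxsum_ext_loc; intros; ring.
    apply is_lim_seq_minus'; auto.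
Qed.

Lemma reindex_Rsum d N l F A : in_grid d N l -> (forall k, Rabs (F k) <= A k) ->
  ex_finite_lim_seq (fun n => boxsum d n A) ->
  is_lim_seq (fun n => boxsum d n (fun m => F (mNl N m l))) (RsumZd d (fun k => if congb d N l k then F k else 0)).
Proof. intros Hg H [LA HA]. destruct (reindex d N l F A LA Hg H HA) as [L [H1 H2]].
  rewrite (RsumZd_is _ _ _ H1). auto. Qed.

Lemma unif_fl (hs : nat -> R -> R) (h : R -> R) :
  (forall eps, 0 < eps -> exists N0, forall n, (N0 <= n)%nat -> forall t, Rabs (hs n t - h t) <= eps) ->
  filterlim hs eventually (@locally (fct_UniformSpace R R_UniformSpace) h).
Proof. intros H P [eps HP]. destruct (H (eps/2)) as [N0 HN]. destruct eps; simpl; lra.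
  exists N0. intros n Hn. apply HP. intros t. specialize (HN n Hn t).
  change (Rabs (hs n t - h t) < eps). destruct eps; simpl in *; lra. Qed.

Lemma unif_lim (u : nat -> R) (l : R) :
  (forall eps, 0 < eps -> exists N0, forall n, (N0 <= n)%nat -> Rabs (u n - l) <= eps) -> is_lim_seq u l.
Proof. intros H. apply is_lim_seq_spec. intros eps. destruct (H (eps/2)) as [N0 HN]. destruct eps; simpl; lra.
  exists N0. intros n Hn. specialize (HN n Hn). destruct eps; simpl in *; lra. Qed.

Fixpoint Intg (d : nat) (f : (nat -> R) -> R) : Prop :=
  match d with
  | O => True
  | S d' => (forall t, Intg d' (fun x => f (updR x d' t))) /\
            ex_RInt (fun t => tint d' (fun x => f (updR x d' t))) (- PI) PI
  end.

Lemma tint_S d f : tint (S d) f = / (2 * PI) * RInt (fun t => tint d (fun x => f (updR x d t))) (- PI) PI.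
Proof. reflexivity. Qed.

Lemma Int_lin d f g a b : Intg d f -> Intg d g ->
  Intg d (fun x => a * f x + b * g x) /\ tint d (fun x => a * f x + b * g x) = a * tint d f + b * tint d g.
Proof. revert f g; induction d; intros f g Hf Hg; [simpl; split; auto|].
  destruct Hf as [Hf1 Hf2], Hg as [Hg1 Hg2].
  assert (E : forall t, tint d (fun x => a * f (updR x d t) + b * g (updR x d t)) =
     a * tint d (fun x => f (updR x d t)) + b * tint d (fun x => g (updR x d t))).
  { intros t. apply (IHd _ _ (Hf1 t) (Hg1 t)). }
  assert (Hex : ex_RInt (fun t => a * tint d (fun x => f (updR x d t)) + b * tint d (fun x => g (updR x d t))) (- PI) PI).
  { apply (ex_RInt_plus (V := R_NormedModule)); apply (ex_RInt_scal (V := R_NormedModule)); auto. }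
  split.
  - split. intros t. apply (IHd _ _ (Hf1 t) (Hg1 t)).
    eapply ex_RInt_ext; [|apply Hex]. intros; simpl; rewrite E; auto.
  - rewrite !tint_S. rewrite (RInt_ext _ (fun t => a * tint d (fun x => f (updR x d t)) + b * tint d (fun x => g (updR x d t)))).
    2:{ intros; rewrite E; auto. }
    rewrite (RInt_plus (V := R_CompleteNormedModule)) by (apply (ex_RInt_scal (V := R_NormedModule)); auto).
    rewrite !(RInt_scal (V := R_CompleteNormedModule)) by auto. unfold scal, plus; simpl; unfold mult; simpl. ring.
Qed.

Lemma tint_bound d f e : Intg d f -> (forall x, Rabs (f x) <= e) -> Rabs (tint d f) <= e.
Proof. revert f; induction d; intros f Hf Hb; [simpl; auto|].
  destruct Hf as [Hf1 Hf2]. rewrite tint_S. pose proof PI_RGT_0.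
  assert (Rabs (RInt (fun t => tint d (fun x => f (updR x d t))) (- PI) PI) <= (PI - - PI) * e).
  { apply abs_RInt_le_const; [lra|auto|intros; apply IHd; auto]. }
  rewrite Rabs_mult, Rabs_right by (apply Rle_ge; apply Rlt_le; apply Rinv_0_lt_compat; lra).
  assert (0 <= / (2 * PI)) by (apply Rlt_le; apply Rinv_0_lt_compat; lra).
  apply (Rmult_le_compat_l (/ (2 * PI))) in H0; auto. replace (/ (2 * PI) * ((PI - - PI) * e)) with e in H0 by (field; lra). auto.
Qed.

Lemma Int_unif d (fs : nat -> (nat -> R) -> R) f : (forall n, Intg d (fs n)) ->
  (forall eps, 0 < eps -> exists N0, forall n, (N0 <= n)%nat -> forall x, Rabs (fs n x - f x) <= eps) ->
  Intg d f /\ is_lim_seq (fun n => tint d (fs n)) (tint d f).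
Proof. revert fs f; induction d; intros fs f Hi Hu.
  - split; [simpl; auto|]. apply unif_lim. intros eps He. destruct (Hu eps He) as [N0 HN]. exists N0. intros; simpl; apply HN; auto.
  - assert (Ht : forall t, Intg d (fun x => f (updR x d t)) /\
       is_lim_seq (fun n => tint d (fun x => fs n (updR x d t))) (tint d (fun x => f (updR x d t)))).
    { intros t. apply IHd. intros n; apply (Hi n). intros eps He. destruct (Hu eps He) as [N0 HN]. exists N0; intros; apply HN; auto. }
    assert (Hu2 : forall eps, 0 < eps -> exists N0, forall n, (N0 <= n)%nat -> forall t,
       Rabs (tint d (fun x => fs n (updR x d t)) - tint d (fun x => f (updR x d t))) <= eps).
    { intros eps He. destruct (Hu eps He) as [N0 HN]. exists N0. intros n Hn t.
      destruct (Int_lin d (fun x => fs n (updR x d t)) (fun x => f (updR x d t)) 1 (-1)) as [HI HE].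
      apply (Hi n). apply Ht.
      replace (tint d (fun x => fs n (updR x d t)) - tint d (fun x => f (updR x d t))) with
        (tint d (fun x => 1 * fs n (updR x d t) + -1 * f (updR x d t))) by (rewrite HE; ring).
      apply tint_bound; auto. intros x. replace (1 * fs n (updR x d t) + -1 * f (updR x d t)) with (fs n (updR x d t) - f (updR x d t)) by ring.
      apply HN; auto. }
    destruct (filterlim_RInt (V := R_CompleteNormedModule) (fun n t => tint d (fun x => fs n (updR x d t))) (- PI) PI eventually
       _ (fun t => tint d (fun x => f (updR x d t))) (fun n => RInt (fun t => tint d (fun x => fs n (updR x d t))) (- PI) PI))
      as [If [HIf1 HIf2]].
    { intros n. apply (RInt_correct (V := R_CompleteNormedModule)). apply (Hi n). }
    { apply unif_fl. auto. }
    split.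
    + split. intros t; apply Ht. exists If; auto.
    + rewrite tint_S. rewrite (is_RInt_unique _ _ _ _ HIf2).
      apply (is_lim_seq_scal_l _ (/ (2 * PI)) If). auto.
Qed.

Lemma Int_const d c : Intg d (fun _ => c) /\ tint d (fun _ => c) = c.
Proof. induction d; [simpl; auto|]. destruct IHd as [H1 H2]. split.
  - split; auto. simpl. rewrite H2. apply ex_RInt_const.
  - rewrite tint_S. rewrite (RInt_ext _ (fun _ => c)) by (intros; apply H2).
    rewrite RInt_const. unfold scal; simpl; unfold mult; simpl. pose proof PI_RGT_0. field. lra. Qed.

Lemma Int_rsum d n (F : nat -> (nat -> R) -> R) : (forall i, Intg d (F i)) ->
  Intg d (fun x => rsum n (fun i => F i x)) /\ tint d (fun x => rsum n (fun i => F i x)) = rsum n (fun i => tint d (F i)).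
Proof. intros H. induction n.
  - simpl. apply Int_const.
  - destruct IHn as [H1 H2]. destruct (Int_lin d _ _ 1 1 H1 (H n)) as [H3 H4].
    replace (fun x => rsum (S n) (fun i => F i x)) with (fun x => 1 * rsum n (fun i => F i x) + 1 * F n x)
      by (apply functional_extensionality; intros; simpl; ring).
    split; auto. rewrite H4, H2. simpl. ring. Qed.

Lemma Int_boxsum d e n (u : (nat -> Z) -> (nat -> R) -> R) : (forall m, Intg d (u m)) ->
  Intg d (fun x => boxsum e n (fun m => u m x)) /\ tint d (fun x => boxsum e n (fun m => u m x)) = boxsum e n (fun m => tint d (u m)).
Proof. revert u; induction e; intros u H.
  - simpl. split; auto. replace (fun x => u (fun _ => 0%Z) x) with (u (fun _ => 0%Z)); auto.
  - destruct (Int_rsum d (2 * n + 1) (fun i x => boxsum e n (fun k => u (updZ k e (Z.of_nat i - Z.of_nat n)%Z) x))) as [H1 H2].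
    { intros i. apply IHe. auto. }
    split. exact H1. rewrite boxsum_S. etransitivity; [exact H2|]. apply rsum_ext. intros i _. apply IHe; auto. Qed.

Lemma Int_series d e (u : (nat -> Z) -> (nat -> R) -> R) A : (forall m, Intg d (u m)) ->
  (forall m x, Rabs (u m x) <= A m) -> ex_finite_lim_seq (fun n => boxsum e n A) ->
  Intg d (fun x => RsumZd e (fun m => u m x)) /\
  tint d (fun x => RsumZd e (fun m => u m x)) = RsumZd e (fun m => tint d (u m)).
Proof. intros Hi Hb [LA HA].
  destruct (Int_unif d (fun n x => boxsum e n (fun m => u m x)) (fun x => RsumZd e (fun m => u m x))) as [H1 H2].
  - intros n. apply Int_boxsum; auto.
  - intros eps He. pose proof HA as HA'. apply is_lim_seq_spec in HA'. destruct (HA' (mkposreal eps He)) as [N0 HN0].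
    exists N0. intros n Hn x.
    destruct (dom_conv e (fun m => u m x) A LA (fun m => Hb m x) HA) as [L [HL1 HL2]].
    rewrite (RsumZd_is _ _ _ HL1). eapply Rle_trans. apply HL2. specialize (HN0 n Hn). simpl in HN0.
    apply Rabs_lt_between in HN0. lra.
  - split; auto.
    assert (Hc : is_lim_seq (fun n => boxsum e n (fun m => tint d (u m))) (RsumZd e (fun m => tint d (u m)))).
    { apply dom_conv_ex with A. intros m. apply tint_bound; auto. exists LA; auto. }
    apply (is_lim_seq_ext _ (fun n => boxsum e n (fun m => tint d (u m)))) in H2.
    2:{ intros n. apply Int_boxsum; auto. }
    apply is_lim_seq_unique in H2. apply is_lim_seq_unique in Hc. rewrite H2 in Hc. injection Hc; auto. Qed.

Lemma sin_kPI (z : Z) : sin (IZR z * PI) = 0.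
Proof. apply sin_eq_0_1. exists z; auto. Qed.

Lemma cos_2kPI (z : Z) : cos (2 * PI * IZR z) = 1.
Proof. replace (2 * PI * IZR z) with (2 * (IZR z * PI)) by ring. rewrite cos_2a_sin, sin_kPI. ring. Qed.
Lemma sin_2kPI (z : Z) : sin (2 * PI * IZR z) = 0.
Proof. replace (2 * PI * IZR z) with (2 * (IZR z * PI)) by ring. rewrite sin_2a, sin_kPI. ring. Qed.

Lemma cos_per x (z : Z) : cos (x + 2 * PI * IZR z) = cos x.
Proof. rewrite cos_plus, cos_2kPI, sin_2kPI. ring. Qed.
Lemma sin_per x (z : Z) : sin (x + 2 * PI * IZR z) = sin x.
Proof. rewrite sin_plus, cos_2kPI, sin_2kPI. ring. Qed.

Lemma cexpi_per x z : cexpi (x + 2 * PI * IZR z) = cexpi x.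
Proof. unfold cexpi. rewrite cos_per, sin_per. auto. Qed.

Lemma updR_same x i t : updR x i t i = t.
Proof. unfold updR. rewrite Nat.eqb_refl. auto. Qed.
Lemma updR_other x i t j : j <> i -> updR x i t j = x j.
Proof. unfold updR. intros. destruct (Nat.eqb_spec j i); [lia|auto]. Qed.

Lemma dotZ_upd d k x j t : (d <= j)%nat -> dotZ d k (updR x j t) = dotZ d k x.
Proof. intros H. unfold dotZ. apply rsum_ext. intros i Hi. rewrite updR_other by lia. auto. Qed.

Lemma dotZ_S_upd d k x t : dotZ (S d) k (updR x d t) = dotZ d k x + IZR (k d) * t.
Proof. unfold dotZ. rewrite rsum_S. fold (dotZ d k (updR x d t)). rewrite dotZ_upd by lia.
  rewrite updR_same. auto. Qed.

Fixpoint zb (d : nat) (k : nat -> Z) : bool :=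
  match d with O => true | S d' => zb d' k && Z.eqb (k d') 0 end.

Lemma int_cos (j : Z) a : is_RInt (fun t => cos (IZR j * t + a)) (- PI) PI (if Z.eqb j 0 then 2 * PI * cos a else 0).
Proof. destruct (Z.eqb_spec j 0).
  - subst. simpl. replace (2 * PI * cos a) with (scal (PI - - PI) (cos a)) by (unfold scal; simpl; unfold mult; simpl; ring).
    apply (is_RInt_ext (V := R_NormedModule) (fun _ => cos a)). intros; simpl. f_equal. ring.
    apply (is_RInt_const (V := R_NormedModule)).
  - assert (Hj : IZR j <> 0) by (apply not_0_IZR; auto).
    replace 0 with (minus (sin (IZR j * PI + a) / IZR j) (sin (IZR j * - PI + a) / IZR j)).
    apply (is_RInt_derive (fun t => sin (IZR j * t + a) / IZR j)).
    + intros t _. auto_derive; auto. field. auto.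
    + intros t _. apply (ex_derive_continuous (fun t => cos (IZR j * t + a))). auto_derive. auto.
    + unfold minus, plus, opp; simpl.
      replace (IZR j * PI + a) with (a + IZR j * PI) by ring. replace (IZR j * - PI + a) with (a - IZR j * PI) by ring.
      rewrite sin_plus, sin_minus, sin_kPI. field. auto.
Qed.

Lemma mono d k : forall a, Intg d (fun x => cos (dotZ d k x + a)) /\
  tint d (fun x => cos (dotZ d k x + a)) = if zb d k then cos a else 0.
Proof. induction d; intros a.
  - simpl. split; auto. unfold dotZ; simpl. f_equal; ring.
  - assert (E : forall t, (fun x => cos (dotZ (S d) k (updR x d t) + a)) = (fun x => cos (dotZ d k x + (IZR (k d) * t + a)))).
    { intros t; apply functional_extensionality; intros x. rewrite dotZ_S_upd. f_equal; ring. }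
    assert (Hin : forall t, tint d (fun x => cos (dotZ (S d) k (updR x d t) + a)) = if zb d k then cos (IZR (k d) * t + a) else 0).
    { intros t. rewrite E. apply IHd. }
    assert (HI : is_RInt (fun t => tint d (fun x => cos (dotZ (S d) k (updR x d t) + a))) (- PI) PI
       (if zb d k then (if Z.eqb (k d) 0 then 2 * PI * cos a else 0) else 0)).
    { apply (is_RInt_ext (V := R_NormedModule) (fun t => if zb d k then cos (IZR (k d) * t + a) else 0)).
      intros; rewrite Hin; reflexivity. destruct (zb d k). apply int_cos.
      pose proof (is_RInt_const (V := R_NormedModule) (- PI) PI 0) as H0.
      replace (scal (PI - - PI) (0:R_NormedModule)) with 0 in H0 by (unfold scal; simpl; unfold mult; simpl; ring). exact H0. }
    split.
    + split. intros t. rewrite E. apply IHd. eexists; eauto.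
    + rewrite tint_S. rewrite (is_RInt_unique _ _ _ _ HI). simpl zb. pose proof PI_RGT_0.
      destruct (zb d k), (Z.eqb (k d) 0); simpl; field; lra.
Qed.

Lemma Int_scal d f a : Intg d f -> Intg d (fun x => a * f x) /\ tint d (fun x => a * f x) = a * tint d f.
Proof. intros H. destruct (Int_lin d f f a 0 H H) as [H1 H2].
  replace (fun x => a * f x) with (fun x => a * f x + 0 * f x) by (apply functional_extensionality; intros; ring).
  split; auto. rewrite H2; ring. Qed.

Lemma abs_cos_le x : Rabs (cos x) <= 1.
Proof. apply Rabs_le. apply COS_bound. Qed.
Lemma abs_sin_le x : Rabs (sin x) <= 1.
Proof. apply Rabs_le. apply SIN_bound. Qed.

Lemma TS_lemma d (r : (nat -> Z) -> R) (j : (nat -> Z) -> (nat -> Z)) a A :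
  (forall m, Rabs (r m) <= A m) -> ex_finite_lim_seq (fun n => boxsum d n A) ->
  Intg d (fun x => RsumZd d (fun m => r m * cos (dotZ d (j m) x + a))) /\
  tint d (fun x => RsumZd d (fun m => r m * cos (dotZ d (j m) x + a))) =
    RsumZd d (fun m => r m * (if zb d (j m) then cos a else 0)).
Proof. intros HA Hex.
  destruct (Int_series d d (fun m x => r m * cos (dotZ d (j m) x + a)) A) as [H1 H2]; auto.
  - intros m. apply Int_scal. apply mono.
  - intros m x. rewrite Rabs_mult. eapply Rle_trans. apply Rmult_le_compat_l. apply Rabs_pos. apply abs_cos_le.
    rewrite Rmult_1_r; auto.
  - split; auto. rewrite H2. f_equal. apply functional_extensionality; intros m.
    destruct (Int_scal d (fun x => cos (dotZ d (j m) x + a)) (r m)) as [_ E]. apply mono. rewrite E.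
    f_equal. apply mono.
Qed.

Lemma zb_loc d v v' : (forall i, (i < d)%nat -> v i = v' i) -> zb d v = zb d v'.
Proof. induction d; simpl; intros H; auto. rewrite IHd by (intros; apply H; lia). rewrite H by lia. auto. Qed.

Lemma zb_false d v i : (i < d)%nat -> v i <> 0%Z -> zb d v = false.
Proof. induction d; intros Hi Hv; [lia|]. simpl. destruct (Nat.eq_dec i d).
  - subst. destruct (Z.eqb_spec (v d) 0); [lia|]. rewrite Bool.andb_false_r; auto.
  - rewrite IHd; auto. lia. Qed.

Lemma zb_true d v : zb d v = true <-> forall i, (i < d)%nat -> v i = 0%Z.
Proof. induction d; simpl; split; intros H. lia. auto.
  - apply andb_prop in H. destruct H as [H1 H2]. intros i Hi. destruct (Nat.eq_dec i d). subst. apply Z.eqb_eq; auto.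
    apply IHd; auto. lia.
  - rewrite (proj2 IHd) by (intros; apply H; lia). rewrite (proj2 (Z.eqb_eq _ _)) by (apply H; lia). auto. Qed.

Lemma RsumZd_0 d : RsumZd d (fun _ => 0) = 0.
Proof. apply RsumZd_is. apply (is_lim_seq_ext (fun _ => 0)). intros; rewrite boxsum_const0; auto. apply is_lim_seq_const. Qed.

Lemma RsumZd_ext d F H : (forall k, F k = H k) -> RsumZd d F = RsumZd d H.
Proof. intros E. replace F with H; auto. symmetry; apply functional_extensionality; auto. Qed.

Lemma bound_exists d (m0 : nat -> Z) : exists n, forall i, (i < d)%nat -> (Z.abs (m0 i) <= Z.of_nat n)%Z.
Proof. induction d. exists O; intros; lia. destruct IHd as [n Hn]. exists (Nat.max n (Z.to_nat (Z.abs (m0 d)))).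
  intros i Hi. destruct (Nat.eq_dec i d). subst. lia. specialize (Hn i ltac:(lia)). lia. Qed.

Definition dloc (d : nat) (v : (nat -> Z) -> R) := forall m m', (forall i, (i < d)%nat -> m i = m' i) -> v m = v m'.

Lemma updZ_id m i : updZ m i (m i) = m.
Proof. apply functional_extensionality; intros j. unfold updZ. destruct (Nat.eqb_spec j i); subst; auto. Qed.

Lemma boxsum_delta d n (m0 : nat -> Z) v : dloc d v -> (forall i, (i < d)%nat -> (Z.abs (m0 i) <= Z.of_nat n)%Z) ->
  boxsum d n (fun m => if zb d (fun i => (m i - m0 i)%Z) then v m else 0) = v m0.
Proof. revert v; induction d; intros v Hv Hb.
  - simpl. apply Hv. intros; lia.
  - rewrite boxsum_S.
    rewrite (rsum_ext _ _ (fun i => if Nat.eqb i (Z.to_nat (m0 d + Z.of_nat n)) then v m0 else 0)).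
    apply rsum_delta. specialize (Hb d ltac:(lia)). lia.
    intros i Hi. cbv beta. set (w := (Z.of_nat i - Z.of_nat n)%Z).
    replace (fun k : nat -> Z => if zb (S d) (fun i0 => (updZ k d w i0 - m0 i0)%Z) then v (updZ k d w) else 0) with
      (fun k => if Z.eqb (w - m0 d) 0 then (if zb d (fun i0 => (k i0 - m0 i0)%Z) then v (updZ k d w) else 0) else 0).
    2:{ apply functional_extensionality; intros k. simpl zb. rewrite updZ_same.
        rewrite (zb_loc d (fun i0 => (updZ k d w i0 - m0 i0)%Z) (fun i0 => (k i0 - m0 i0)%Z)) by (intros; rewrite updZ_other by lia; auto).
        destruct (zb d _), (Z.eqb _ 0); auto. }
    destruct (Z.eqb_spec (w - m0 d) 0); destruct (Nat.eqb_spec i (Z.to_nat (m0 d + Z.of_nat n))).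
    + rewrite (IHd (fun k => v (updZ k d w))).
      * apply Hv. intros j Hj. unfold updZ. destruct (Nat.eqb_spec j d); subst; auto. lia.
      * intros m m' Hm. apply Hv. intros j Hj. unfold updZ. destruct (Nat.eqb_spec j d); auto. apply Hm; lia.
      * intros; apply Hb; lia.
    + exfalso. specialize (Hb d ltac:(lia)). unfold w in *. lia.
    + exfalso. specialize (Hb d ltac:(lia)). unfold w in *. lia.
    + apply boxsum_const0.
Qed.

Lemma RsumZd_delta d (m0 : nat -> Z) v : dloc d v ->
  RsumZd d (fun m => if zb d (fun i => (m i - m0 i)%Z) then v m else 0) = v m0.
Proof. intros Hv. destruct (bound_exists d m0) as [n0 Hn0]. apply RsumZd_is.
  apply (is_lim_seq_incr_n _ n0). apply (is_lim_seq_ext (fun _ => v m0)). intros n. symmetry.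
  apply boxsum_delta; auto. intros i Hi. specialize (Hn0 i Hi). lia. apply is_lim_seq_const. Qed.

Lemma rsum_constant n c : rsum n (fun _ => c) = INR n * c.
Proof. induction n; simpl rsum. simpl; ring. rewrite IHn, S_INR; ring. Qed.

Lemma rsum_telescope n (g : nat -> R) : rsum n (fun t => g (S t) - g t) = g n - g O.
Proof. induction n; simpl rsum. ring. rewrite IHn; ring. Qed.

Lemma grid1 N (j : Z) a : Nat.Even N -> (0 < N)%nat ->
  rsum N (fun t => cos (IZR j * (2 * PI / INR N * INR t - PI) + a)) =
  if Z.eqb (j mod Z.of_nat N) 0 then INR N * cos a else 0.
Proof. intros [h Hh] HN. assert (HNR : INR N <> 0) by (apply not_0_INR; lia).
  destruct (Z.eqb_spec (j mod Z.of_nat N) 0) as [E|E].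
  - apply Z.mod_divide in E; [|lia]. destruct E as [q Hq].
    rewrite <- rsum_constant. apply rsum_ext. intros t _.
    replace (IZR j * (2 * PI / INR N * INR t - PI) + a) with (a + 2 * PI * IZR (q * Z.of_nat t - q * Z.of_nat h)).
    apply cos_per.
    rewrite Hq, minus_IZR, !mult_IZR, <- !INR_IZR_INZ. rewrite Hh, mult_INR. replace (INR 2) with 2 by (simpl; ring).
    field. intros Hc; apply HNR; rewrite Hh, mult_INR, Hc; ring.
  - set (th := 2 * PI * IZR j / INR N). set (be := a - IZR j * PI).
    rewrite (rsum_ext _ _ (fun t => cos (th * INR t + be))).
    2:{ intros; f_equal. unfold th, be. field. auto. }
    assert (Hs : sin (th / 2) <> 0).
    { intros Hs. apply sin_eq_0_0 in Hs. destruct Hs as [k Hk]. apply E.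
      assert (IZR j = IZR (k * Z.of_nat N)).
      { rewrite mult_IZR, <- INR_IZR_INZ. unfold th in Hk. pose proof PI_RGT_0.
        replace (IZR j) with ((2 * PI * IZR j / INR N / 2) * INR N / PI) by (field; repeat split; auto; lra).
        rewrite Hk. field. lra. }
      apply eq_IZR in H. rewrite H. apply Z_mod_mult. }
    set (g := fun t : nat => sin (th * (INR t - / 2) + be)).
    assert (Hg : forall t, g (S t) - g t = 2 * sin (th / 2) * cos (th * INR t + be)).
    { intros t. unfold g. rewrite S_INR. rewrite form4. replace ((th * (INR t + 1 - / 2) + be + (th * (INR t - / 2) + be)) / 2) with (th * INR t + be) by field.
      replace ((th * (INR t + 1 - / 2) + be - (th * (INR t - / 2) + be)) / 2) with (th / 2) by field. ring. }
    assert (rsum N (fun t => g (S t) - g t) = 0).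
    { rewrite rsum_telescope. unfold g. simpl INR.
      replace (th * (INR N - / 2) + be) with ((th * (0 - / 2) + be) + 2 * PI * IZR j).
      rewrite sin_per. ring. unfold th. field. auto. }
    rewrite (rsum_ext _ _ (fun t => 2 * sin (th / 2) * cos (th * INR t + be))) in H by (intros; apply Hg).
    rewrite rsum_scal in H. apply Rmult_integral in H. destruct H; auto. lra.
Qed.

Fixpoint zmodb (d N : nat) (j : nat -> Z) : bool :=
  match d with O => true | S d' => zmodb d' N j && Z.eqb (j d' mod Z.of_nat N) 0 end.

Lemma gridpt_upd N p d t : gridpt N (updN p d t) = updR (gridpt N p) d (2 * PI / INR N * INR t - PI).
Proof. apply functional_extensionality; intros i. unfold gridpt, updN, updR. destruct (Nat.eqb i d); auto. Qed.

Lemma gridsum_S d N F : gridsum (S d) N F = rsum N (fun t => gridsum d N (fun p => F (updN p d t))).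
Proof. reflexivity. Qed.

Lemma gridsum_ext d N F H : (forall p, F p = H p) -> gridsum d N F = gridsum d N H.
Proof. intros E. replace F with H; auto. symmetry; apply functional_extensionality; auto. Qed.

Lemma gridsum_scal d N a F : gridsum d N (fun p => a * F p) = a * gridsum d N F.
Proof. revert F; induction d; intros; simpl; auto. rewrite <- rsum_scal. apply rsum_ext; intros; apply IHd. Qed.

Lemma gridsum_plus d N F H : gridsum d N (fun p => F p + H p) = gridsum d N F + gridsum d N H.
Proof. revert F H; induction d; intros; simpl; auto. rewrite <- rsum_plus. apply rsum_ext; intros; apply IHd. Qed.

Lemma grid_cos d N (j : nat -> Z) : Nat.Even N -> (0 < N)%nat -> forall a,
  gridsum d N (fun p => cos (dotZ d j (gridpt N p) + a)) = if zmodb d N j then INR N ^ d * cos a else 0.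
Proof. intros HE HN. induction d; intros a.
  - simpl. unfold dotZ; simpl. rewrite Rplus_0_l; ring.
  - rewrite gridsum_S.
    rewrite (rsum_ext _ _ (fun t => (if zmodb d N j then INR N ^ d else 0) *
       cos (IZR (j d) * (2 * PI / INR N * INR t - PI) + a))).
    2:{ intros t _. rewrite (gridsum_ext _ _ _ (fun p => cos (dotZ d j (gridpt N p) + (IZR (j d) * (2 * PI / INR N * INR t - PI) + a)))).
        rewrite IHd. destruct zmodb; ring.
        intros p. rewrite gridpt_upd, dotZ_S_upd. f_equal. ring. }
    rewrite rsum_scal, grid1 by auto. simpl zmodb. destruct (zmodb d N j), (Z.eqb _ 0); simpl; ring.
Qed.

Lemma rmod_bounds a b : 0 < b -> 0 <= rmod a b < b.
Proof. intros Hb. unfold rmod. destruct (base_Int_part (a / b)) as [H1 H2].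
  set (z := IZR (Int_part (a / b))) in *.
  assert (b * z <= a). { apply (Rmult_le_compat_l b) in H1; [|lra]. replace (b * (a / b)) with a in H1 by (field; lra). auto. }
  assert (a < b * z + b). { assert (a / b < z + 1) by lra. apply (Rmult_lt_compat_l b) in H0; [|lra].
    replace (b * (a / b)) with a in H0 by (field; lra). lra. }
  lra. Qed.

Lemma tmod_torus d v : in_torus d (tmod d v).
Proof. intros i Hi. unfold tmod. rewrite (proj2 (Nat.ltb_lt i d) Hi). pose proof PI_RGT_0.
  pose proof (rmod_bounds (v i + PI) (2 * PI) ltac:(lra)). lra. Qed.

Lemma dotZ_tmod d k v : exists z : Z, dotZ d k (tmod d v) = dotZ d k v + 2 * PI * IZR z.
Proof. unfold dotZ.
  assert (forall e, (e <= d)%nat -> exists z, rsum e (fun i => IZR (k i) * tmod d v i) = rsum e (fun i => IZR (k i) * v i) + 2 * PI * IZR z).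
  { induction e; intros He. exists 0%Z. simpl. ring.
    destruct IHe as [z Hz]; [lia|]. rewrite !rsum_S, Hz.
    exists (z - k e * Int_part ((v e + PI) / (2 * PI)))%Z.
    unfold tmod. rewrite (proj2 (Nat.ltb_lt e d)) by lia. unfold rmod.
    rewrite minus_IZR, mult_IZR. ring. }
  apply H; lia. Qed.

Lemma cos_dotZ_tmod d k v a : cos (dotZ d k (tmod d v) + a) = cos (dotZ d k v + a).
Proof. destruct (dotZ_tmod d k v) as [z Hz]. rewrite Hz.
  replace (dotZ d k v + 2 * PI * IZR z + a) with (dotZ d k v + a + 2 * PI * IZR z) by ring. apply cos_per. Qed.
Lemma sin_dotZ_tmod d k v : sin (dotZ d k (tmod d v)) = sin (dotZ d k v).
Proof. destruct (dotZ_tmod d k v) as [z Hz]. rewrite Hz. apply sin_per. Qed.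

Lemma dotZ_loc d k k' x : (forall i, (i < d)%nat -> k i = k' i) -> dotZ d k x = dotZ d k' x.
Proof. intros H. unfold dotZ. apply rsum_ext. intros i Hi. rewrite H; auto. Qed.

Lemma dotZ_lin d (k1 k2 : nat -> Z) x : dotZ d (fun i => (k1 i - k2 i)%Z) x = dotZ d k1 x - dotZ d k2 x.
Proof. unfold dotZ. induction d; simpl rsum. ring. rewrite IHd, minus_IZR. ring. Qed.

Lemma dotZ_xlin d k x y : dotZ d k (fun i => x i - y i) = dotZ d k x - dotZ d k y.
Proof. unfold dotZ. induction d; simpl rsum. ring. rewrite IHd. ring. Qed.

Lemma rsum_lim n (u : nat -> nat -> R) (v : nat -> R) : (forall i, is_lim_seq (fun m => u m i) (v i)) ->
  is_lim_seq (fun m => rsum n (u m)) (rsum n v).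
Proof. intros H. induction n; simpl rsum. apply is_lim_seq_const. apply is_lim_seq_plus'; auto. Qed.

Lemma gridsum_lim d N (u : nat -> (nat -> nat) -> R) (v : (nat -> nat) -> R) : (forall p, is_lim_seq (fun m => u m p) (v p)) ->
  is_lim_seq (fun m => gridsum d N (u m)) (gridsum d N v).
Proof. revert u v; induction d; intros u v H. simpl; auto.
  rewrite gridsum_S. apply (is_lim_seq_ext (fun m => rsum N (fun t => gridsum d N (fun p => u m (updN p d t))))).
  intros; rewrite gridsum_S; auto. apply rsum_lim. intros t. apply IHd. intros; apply H. Qed.

Lemma gridsum_rsum d N n (F : (nat -> nat) -> nat -> R) :
  gridsum d N (fun p => rsum n (fun i => F p i)) = rsum n (fun i => gridsum d N (fun p => F p i)).
Proof. induction n; simpl rsum. replace (fun _ : nat -> nat => 0) with (fun _ : nat -> nat => 0 * 0) by (apply functional_extensionality; intros; ring).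
  rewrite gridsum_scal; ring. rewrite gridsum_plus, IHn. auto. Qed.

Lemma gridsum_boxsum d N e n (T : (nat -> nat) -> (nat -> Z) -> R) :
  gridsum d N (fun p => boxsum e n (fun k => T p k)) = boxsum e n (fun k => gridsum d N (fun p => T p k)).
Proof. revert T; induction e; intros T. simpl; auto.
  rewrite boxsum_S. rewrite (gridsum_ext _ _ _ (fun p => rsum (2 * n + 1) (fun i => boxsum e n (fun k => T p (updZ k e (Z.of_nat i - Z.of_nat n)%Z))))).
  2:{ intros; rewrite boxsum_S; auto. }
  rewrite gridsum_rsum. apply rsum_ext. intros; apply IHe. Qed.

Lemma lim_RsumZd d F (L : R) : is_lim_seq (fun n => boxsum d n F) L -> is_lim_seq (fun n => boxsum d n F) (RsumZd d F).
Proof. intros H. rewrite (RsumZd_is _ _ _ H). auto. Qed.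

Lemma lim_scal_l (u : nat -> R) (a l : R) : is_lim_seq u l -> is_lim_seq (fun n => a * u n) (a * l).
Proof. intros H. apply (is_lim_seq_scal_l u a l H). Qed.
Lemma lim_scal_r (u : nat -> R) (a l : R) : is_lim_seq u l -> is_lim_seq (fun n => u n * a) (l * a).
Proof. intros H. apply (is_lim_seq_ext (fun n => a * u n)). intros; ring. rewrite Rmult_comm. apply lim_scal_l; auto. Qed.

Lemma abs_mul_cos (c t : R) : 0 <= c -> Rabs (c * cos t) <= c.
Proof. intros H. rewrite Rabs_mult, (Rabs_pos_eq c H). pose proof (abs_cos_le t).
  apply Rle_trans with (c * 1); [apply Rmult_le_compat_l|]; lra. Qed.
Lemma abs_mul_sin (c t : R) : 0 <= c -> Rabs (c * sin t) <= c.
Proof. intros H. rewrite Rabs_mult, (Rabs_pos_eq c H). pose proof (abs_sin_le t).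
  apply Rle_trans with (c * 1); [apply Rmult_le_compat_l|]; lra. Qed.

Lemma G_loc d g M (G : (nat -> Z) -> R)
  (hG_fourier : forall k : nat -> Z,
     RtoC (G k) = Ctint d (fun th => Cmult (RtoC (g (matvec d M th))) (cexpi (- dotZ d k th)))) :
  forall k k', (forall i, (i < d)%nat -> k i = k' i) -> G k = G k'.
Proof. intros k k' H. assert (RtoC (G k) = RtoC (G k')).
  { rewrite !hG_fourier. f_equal. apply functional_extensionality; intros th. rewrite (dotZ_loc d k k'); auto. }
  injection H0; auto. Qed.

Lemma K_repr d g M (G : (nat -> Z) -> R)
  (hK_expansion : forall th : nat -> R, in_torus d th ->
     RtoC (g (matvec d M th)) = CsumZd d (fun k => Cmult (RtoC (G k)) (phi d k th))) :
  forall x y, kern d g M x y = RsumZd d (fun k => G k * cos (dotZ d k (fun i => x i - y i) + 0)) /\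
    0 = RsumZd d (fun k => G k * sin (dotZ d k (fun i => x i - y i))).
Proof. intros x y. pose proof (hK_expansion _ (tmod_torus d (fun i => x i - y i))) as H.
  unfold CsumZd, RtoC in H. injection H; intros H2 H1. unfold kern. split.
  - rewrite H1. apply RsumZd_ext. intros k. unfold phi, cexpi; simpl. rewrite <- (Rplus_0_r (dotZ d k (tmod d _))).
    rewrite cos_dotZ_tmod. ring.
  - rewrite H2. apply RsumZd_ext. intros k. unfold phi, cexpi; simpl. rewrite sin_dotZ_tmod. ring.
Qed.

Definition lz (l : nat -> nat) : nat -> Z := fun i => Z.of_nat (l i).

Lemma Gl1_facts d N G l : in_grid d N l -> (forall k, 0 <= G k) -> ex_finite_lim_seq (fun n => boxsum d n G) ->
  is_lim_seq (fun n => boxsum d n (fun m => G (mNl N m l))) (Gl1 d N G l) /\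
  Gl1 d N G l = RsumZd d (fun k => if congb d N l k then G k else 0).
Proof. intros Hg HG Hs.
  pose proof (reindex_Rsum d N l G G Hg (fun k => Req_le _ _ (Rabs_pos_eq _ (HG k))) Hs) as H.
  assert (E : Gl1 d N G l = RsumZd d (fun k => if congb d N l k then G k else 0)).
  { unfold Gl1. rewrite (RsumZd_ext _ _ (fun m => G (mNl N m l))) by (intros; apply Rabs_pos_eq; auto).
    apply RsumZd_is. auto. }
  rewrite E. auto. Qed.

Lemma modeqb_sym (a b : Z) N : Z.eqb ((a - b) mod Z.of_nat N) 0 = Z.eqb ((b - a) mod Z.of_nat N) 0.
Proof. destruct (Nat.eq_dec N 0). subst. simpl Z.of_nat. rewrite !Zmod_0_r.
  destruct (Z.eqb_spec (a - b) 0), (Z.eqb_spec (b - a) 0); auto; lia.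
  destruct (Z.eqb_spec ((a - b) mod Z.of_nat N) 0) as [E1|E1], (Z.eqb_spec ((b - a) mod Z.of_nat N) 0) as [E2|E2]; auto; exfalso.
  - apply E2. replace (b - a)%Z with (- (a - b))%Z by ring. apply Z.mod_opp_l_z; auto; lia.
  - apply E1. replace (a - b)%Z with (- (b - a))%Z by ring. apply Z.mod_opp_l_z; auto; lia. Qed.

Lemma zmodb_congb d N l k : zmodb d N (fun i => (lz l i - k i)%Z) = congb d N l k.
Proof. induction d; simpl; auto. rewrite IHd. f_equal. unfold lz. apply modeqb_sym. Qed.

Lemma grid_cos' d N (j : nat -> Z) : Nat.Even N -> (0 < N)%nat \/ d = O -> forall a,
  gridsum d N (fun p => cos (dotZ d j (gridpt N p) + a)) = if zmodb d N j then INR N ^ d * cos a else 0.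
Proof. intros HE [HN|HN] a. apply grid_cos; auto. subst. simpl. unfold dotZ; simpl. rewrite Rplus_0_l; ring. Qed.

Lemma grid_pos d N l : in_grid d N l -> (0 < N)%nat \/ d = O.
Proof. intros [H _]. destruct d. auto. left. specialize (H O). lia. Qed.

Lemma KS d N g M G l x a : Nat.Even N -> in_grid d N l -> (forall k, 0 <= G k) -> ex_finite_lim_seq (fun n => boxsum d n G) ->
  (forall x y, kern d g M x y = RsumZd d (fun k => G k * cos (dotZ d k (fun i => x i - y i) + 0)) /\
    0 = RsumZd d (fun k => G k * sin (dotZ d k (fun i => x i - y i)))) ->
  gridsum d N (fun p => kern d g M x (gridpt N p) * cos (dotZ d (lz l) (gridpt N p) + a)) =
  INR N ^ d * RsumZd d (fun m => G (mNl N m l) * cos (dotZ d (mNl N m l) x + a)).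
Proof. intros HE Hg HG Hs HK.
  assert (HGa : forall k, Rabs (G k) <= G k) by (intros; rewrite Rabs_pos_eq; auto; lra).
  set (T := fun p k => G k * cos (dotZ d k (fun i => x i - gridpt N p i) + (dotZ d (lz l) (gridpt N p) + a))).
  assert (H1 : forall p, is_lim_seq (fun n => boxsum d n (T p))
     (kern d g M x (gridpt N p) * cos (dotZ d (lz l) (gridpt N p) + a))).
  { intros p. destruct (HK x (gridpt N p)) as [Hc Hs0]. rewrite Hc.
    set (ph := dotZ d (lz l) (gridpt N p) + a).
    apply (is_lim_seq_ext (fun n => boxsum d n (fun k => G k * cos (dotZ d k (fun i => x i - gridpt N p i) + 0)) * cos ph
        - boxsum d n (fun k => G k * sin (dotZ d k (fun i => x i - gridpt N p i))) * sin ph)).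
    { intros n. rewrite (Rmult_comm _ (cos ph)), (Rmult_comm _ (sin ph)), <- !boxsum_scal, <- boxsum_minus.
      apply boxsum_ext_loc. intros k _. unfold T. fold ph. rewrite !cos_plus, cos_0, sin_0. ring. }
    replace (RsumZd d (fun k => G k * cos (dotZ d k (fun i => x i - gridpt N p i) + 0)) * cos ph) with
      (RsumZd d (fun k => G k * cos (dotZ d k (fun i => x i - gridpt N p i) + 0)) * cos ph
        - RsumZd d (fun k => G k * sin (dotZ d k (fun i => x i - gridpt N p i))) * sin ph)
      by (rewrite <- Hs0; ring).
    set (al := fun k => dotZ d k (fun i => x i - gridpt N p i)).
    apply is_lim_seq_minus'; apply lim_scal_r; apply dom_conv_ex with G; auto.
    intros k; apply abs_mul_cos; auto. intros k; apply abs_mul_sin; auto. }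
  set (H := fun k => if congb d N l k then G k * cos (dotZ d k x + a) else 0).
  assert (H2 : forall k, gridsum d N (fun p => T p k) = INR N ^ d * H k).
  { intros k. unfold T, H. rewrite gridsum_scal.
    rewrite (gridsum_ext _ _ _ (fun p => cos (dotZ d (fun i => (lz l i - k i)%Z) (gridpt N p) + (dotZ d k x + a)))).
    rewrite grid_cos' by (auto; apply (grid_pos _ _ _ Hg)). rewrite zmodb_congb. destruct congb; ring.
    intros p. f_equal. rewrite dotZ_lin, dotZ_xlin. ring. }
  pose proof (gridsum_lim d N (fun n p => boxsum d n (T p)) _ H1) as H3. simpl in H3.
  apply (is_lim_seq_ext _ (fun n => INR N ^ d * boxsum d n H)) in H3.
  2:{ intros n. rewrite gridsum_boxsum, <- boxsum_scal. apply boxsum_ext_loc; intros; apply H2. }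
  assert (H4 : is_lim_seq (fun n => INR N ^ d * boxsum d n H) (INR N ^ d * RsumZd d H)).
  { apply lim_scal_l. apply dom_conv_ex with G; auto. intros k. unfold H. destruct congb.
    apply abs_mul_cos; auto. rewrite Rabs_R0; auto. }
  pose proof (reindex_Rsum d N l (fun k => G k * cos (dotZ d k x + a)) G Hg) as H5.
  cbv beta in H5. specialize (H5 (fun k => abs_mul_cos _ _ (HG k)) Hs).
  rewrite (RsumZd_is _ _ _ H5). fold H.
  apply is_lim_seq_unique in H3. apply is_lim_seq_unique in H4. rewrite H3 in H4. injection H4; auto.
Qed.

Lemma Cmult_fst z w : fst (Cmult z w) = fst z * fst w - snd z * snd w.
Proof. reflexivity. Qed.
Lemma Cmult_snd z w : snd (Cmult z w) = fst z * snd w + snd z * fst w.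
Proof. reflexivity. Qed.

Lemma psi_fst d N G l x : fst (psi d N G l x) =
  / sqrt (Gl1 d N G l) * RsumZd d (fun m => G (mNl N m l) * cos (dotZ d (mNl N m l) x)).
Proof. unfold psi. rewrite Cmult_fst. cbn [fst snd RtoC]. unfold CsumZd. simpl fst.
  rewrite Rmult_0_l, Rminus_0_r. f_equal. apply RsumZd_ext. intros m. unfold Re, phi, cexpi. simpl. ring. Qed.

Lemma psi_snd d N G l x : snd (psi d N G l x) =
  / sqrt (Gl1 d N G l) * RsumZd d (fun m => G (mNl N m l) * sin (dotZ d (mNl N m l) x)).
Proof. unfold psi. rewrite Cmult_snd. cbn [fst snd RtoC]. unfold CsumZd. simpl snd.
  rewrite Rmult_0_l, Rplus_0_r. f_equal. apply RsumZd_ext. intros m. unfold Im, phi, cexpi. simpl. ring. Qed.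

Lemma dotZ_mNl_grid d N m l p : Nat.Even N -> (0 < N)%nat \/ d = O ->
  exists z, dotZ d (mNl N m l) (gridpt N p) = dotZ d (lz l) (gridpt N p) + 2 * PI * IZR z.
Proof. intros [h Hh] [HN|HN]; [|subst; exists 0%Z; unfold dotZ; simpl; ring].
  unfold dotZ. induction d. exists 0%Z; simpl; ring.
  destruct IHd as [z Hz]. rewrite !rsum_S, Hz. exists (z + m d * (Z.of_nat (p d) - Z.of_nat h))%Z.
  unfold mNl, lz, gridpt. rewrite !plus_IZR, !mult_IZR, minus_IZR, <- !INR_IZR_INZ.
  assert (INR N = 2 * INR h) by (rewrite Hh, mult_INR; simpl; ring).
  assert (INR N <> 0) by (apply not_0_INR; lia). rewrite H in *. field. lra. Qed.

Lemma psi_grid d N G l p : Nat.Even N -> in_grid d N l -> (forall k, 0 <= G k) -> ex_finite_lim_seq (fun n => boxsum d n G) ->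
  fst (psi d N G l (gridpt N p)) = / sqrt (Gl1 d N G l) * Gl1 d N G l * cos (dotZ d (lz l) (gridpt N p)) /\
  snd (psi d N G l (gridpt N p)) = / sqrt (Gl1 d N G l) * Gl1 d N G l * sin (dotZ d (lz l) (gridpt N p)).
Proof. intros HE Hg HG Hs. destruct (Gl1_facts d N G l Hg HG Hs) as [Hb _].
  rewrite psi_fst, psi_snd. rewrite !Rmult_assoc. split; f_equal.
  - apply RsumZd_is. apply (is_lim_seq_ext (fun n => boxsum d n (fun m => G (mNl N m l)) * cos (dotZ d (lz l) (gridpt N p)))).
    intros n. rewrite Rmult_comm, <- boxsum_scal. apply boxsum_ext_loc. intros m _.
    destruct (dotZ_mNl_grid d N m l p HE (grid_pos _ _ _ Hg)) as [z Hz]. rewrite Hz, cos_per. ring.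
    apply lim_scal_r; auto.
  - apply RsumZd_is. apply (is_lim_seq_ext (fun n => boxsum d n (fun m => G (mNl N m l)) * sin (dotZ d (lz l) (gridpt N p)))).
    intros n. rewrite Rmult_comm, <- boxsum_scal. apply boxsum_ext_loc. intros m _.
    destruct (dotZ_mNl_grid d N m l p HE (grid_pos _ _ _ Hg)) as [z Hz]. rewrite Hz, sin_per. ring.
    apply lim_scal_r; auto.
Qed.

Lemma cos_minus_PI2 t : cos (t + - (PI / 2)) = sin t.
Proof. rewrite cos_plus, cos_neg, sin_neg, cos_PI2, sin_PI2. ring. Qed.

Lemma TK_claim d N g M G l x : Nat.Even N -> in_grid d N l -> (forall k, 0 <= G k) -> ex_finite_lim_seq (fun n => boxsum d n G) ->
  (forall x y, kern d g M x y = RsumZd d (fun k => G k * cos (dotZ d k (fun i => x i - y i) + 0)) /\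
    0 = RsumZd d (fun k => G k * sin (dotZ d k (fun i => x i - y i)))) ->
  TK d N (kern d g M) (psi d N G l) x = Cmult (RtoC (Gl1 d N G l)) (psi d N G l x).
Proof. intros HE Hg HG Hs HK.
  assert (HNd : INR N ^ d <> 0).
  { destruct (grid_pos _ _ _ Hg) as [HN|HN]. apply pow_nonzero. apply not_0_INR; lia. subst; simpl; lra. }
  set (c := / sqrt (Gl1 d N G l)). set (L1 := Gl1 d N G l).
  unfold TK, Cgridsum. apply injective_projections.
  - rewrite !Cmult_fst. cbn [fst snd RtoC]. rewrite psi_fst. fold c L1.
    rewrite (gridsum_ext _ _ _ (fun p => (c * L1) * (kern d g M x (gridpt N p) * cos (dotZ d (lz l) (gridpt N p) + 0)))).
    2:{ intros p. unfold Re. rewrite Cmult_fst. cbn [fst snd RtoC]. rewrite (proj1 (psi_grid d N G l p HE Hg HG Hs)).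
        fold c L1. rewrite Rplus_0_r. ring. }
    rewrite gridsum_scal, (KS d N g M G l x 0) by auto.
    rewrite (RsumZd_ext _ _ (fun m => G (mNl N m l) * cos (dotZ d (mNl N m l) x))) by (intros; rewrite Rplus_0_r; auto).
    field. auto.
  - rewrite !Cmult_snd. cbn [fst snd RtoC]. rewrite psi_snd. fold c L1.
    rewrite (gridsum_ext _ _ _ (fun p => (c * L1) * (kern d g M x (gridpt N p) * cos (dotZ d (lz l) (gridpt N p) + - (PI / 2))))).
    2:{ intros p. unfold Im. rewrite Cmult_snd. cbn [fst snd RtoC]. rewrite (proj2 (psi_grid d N G l p HE Hg HG Hs)).
        fold c L1. rewrite cos_minus_PI2. ring. }
    rewrite gridsum_scal, (KS d N g M G l x (- (PI / 2))) by auto.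
    rewrite (RsumZd_ext _ _ (fun m => G (mNl N m l) * sin (dotZ d (mNl N m l) x))) by (intros; rewrite cos_minus_PI2; auto).
    field. auto.
Qed.

Lemma Gl1_nonneg d N G l : in_grid d N l -> (forall k, 0 <= G k) -> ex_finite_lim_seq (fun n => boxsum d n G) -> 0 <= Gl1 d N G l.
Proof. intros Hg HG Hs. destruct (Gl1_facts d N G l Hg HG Hs) as [Hb _].
  apply (lim_le_real (fun _ => 0) _ 0 _ (fun n => boxsum_nonneg d n _ (fun m => HG _)) (is_lim_seq_const 0) Hb). Qed.

Lemma dotZ_grid0 d l N : exists z, dotZ d (lz l) (gridpt N (fun _ => 0%nat)) = IZR z * PI.
Proof. unfold dotZ. induction d. exists 0%Z; simpl; ring. destruct IHd as [z Hz]. rewrite rsum_S, Hz.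
  exists (z - lz l d)%Z. unfold gridpt. rewrite minus_IZR. simpl INR. ring. Qed.

Lemma Gl1_pos d N g M G l : Nat.Even N -> in_grid d N l -> (forall k, 0 <= G k) -> ex_finite_lim_seq (fun n => boxsum d n G) ->
  (forall x y, kern d g M x y = RsumZd d (fun k => G k * cos (dotZ d k (fun i => x i - y i) + 0)) /\
    0 = RsumZd d (fun k => G k * sin (dotZ d k (fun i => x i - y i)))) ->
  kernel_matrix_invertible d N (kern d g M) -> 0 < Gl1 d N G l.
Proof. intros HE Hg HG Hs HK Hinv.
  destruct (Rle_lt_or_eq_dec _ _ (Gl1_nonneg d N G l Hg HG Hs)) as [H|H]; auto. exfalso.
  destruct (Gl1_facts d N G l Hg HG Hs) as [Hb _].
  assert (Hle : forall n, boxsum d n (fun m => G (mNl N m l)) <= 0).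
  { intros n. rewrite H. apply incr_le_lim with (u := fun n => boxsum d n (fun m => G (mNl N m l))); auto.
    intros; apply boxsum_mono_le; auto. }
  assert (Hz : forall x, RsumZd d (fun m => G (mNl N m l) * cos (dotZ d (mNl N m l) x + 0)) = 0).
  { intros x. apply RsumZd_is. apply (is_lim_seq_ext (fun _ => 0)); [|apply is_lim_seq_const].
    intros n. pose proof (boxsum_abs d n (fun m => G (mNl N m l) * cos (dotZ d (mNl N m l) x + 0)) (fun m => G (mNl N m l))
      (fun m => abs_mul_cos _ _ (HG _))). pose proof (Hle n). pose proof (Rabs_pos (boxsum d n (fun m => G (mNl N m l) * cos (dotZ d (mNl N m l) x + 0)))).
    assert (Rabs (boxsum d n (fun m => G (mNl N m l) * cos (dotZ d (mNl N m l) x + 0))) = 0) by lra.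
    apply Rabs_eq_0 in H3. auto. }
  assert (Hg0 : in_grid d N (fun _ => 0%nat)).
  { split; auto. intros i Hi. destruct (grid_pos _ _ _ Hg); lia. }
  pose proof (Hinv (fun q => cos (dotZ d (lz l) (gridpt N q) + 0))) as Hi.
  assert (cos (dotZ d (lz l) (gridpt N (fun _ => 0%nat)) + 0) = 0).
  { apply Hi; auto. intros p _. rewrite (KS d N g M G l (gridpt N p) 0) by auto. rewrite Hz. ring. }
  destruct (dotZ_grid0 d l N) as [z Ez]. rewrite Ez, Rplus_0_r in H0.
  pose proof (sin2_cos2 (IZR z * PI)). rewrite sin_kPI, H0 in H1. unfold Rsqr in H1. lra.
Qed.

Lemma Rsum_abs_le d F A (LA : R) : (forall k, Rabs (F k) <= A k) -> is_lim_seq (fun n => boxsum d n A) LA ->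
  Rabs (RsumZd d F) <= LA.
Proof. intros H HA. destruct (dom_conv d F A LA H HA) as [L [HL _]]. rewrite (RsumZd_is _ _ _ HL).
  apply (lim_le_real (fun n => Rabs (boxsum d n F)) (fun n => boxsum d n A)); auto.
  intros; apply boxsum_abs; auto. apply (is_lim_seq_abs _ L) in HL. auto. Qed.



Lemma psi_conv d N G l x : in_grid d N l -> (forall k, 0 <= G k) -> ex_finite_lim_seq (fun n => boxsum d n G) ->
  is_lim_seq (fun n => boxsum d n (fun m => G (mNl N m l) * cos (dotZ d (mNl N m l) x)))
    (RsumZd d (fun m => G (mNl N m l) * cos (dotZ d (mNl N m l) x))) /\
  is_lim_seq (fun n => boxsum d n (fun m => G (mNl N m l) * sin (dotZ d (mNl N m l) x)))
    (RsumZd d (fun m => G (mNl N m l) * sin (dotZ d (mNl N m l) x))) /\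
  Rabs (RsumZd d (fun m => G (mNl N m l) * cos (dotZ d (mNl N m l) x))) <= Gl1 d N G l /\
  Rabs (RsumZd d (fun m => G (mNl N m l) * sin (dotZ d (mNl N m l) x))) <= Gl1 d N G l.
Proof. intros Hg HG Hs. destruct (Gl1_facts d N G l Hg HG Hs) as [Hb _].
  repeat split.
  - apply dom_conv_ex with (fun m => G (mNl N m l)). intros; apply abs_mul_cos; auto. eexists; eauto.
  - apply dom_conv_ex with (fun m => G (mNl N m l)). intros; apply abs_mul_sin; auto. eexists; eauto.
  - apply Rsum_abs_le with (fun m => G (mNl N m l)); auto. intros; apply abs_mul_cos; auto.
  - apply Rsum_abs_le with (fun m => G (mNl N m l)); auto. intros; apply abs_mul_sin; auto.
Qed.

Lemma PP d N G l (j : nat -> Z) x : in_grid d N l -> (forall k, 0 <= G k) -> ex_finite_lim_seq (fun n => boxsum d n G) ->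
  fst (Cmult (psi d N G l x) (Cconj (phi d j x))) =
    RsumZd d (fun m => (/ sqrt (Gl1 d N G l) * G (mNl N m l)) * cos (dotZ d (fun i => (mNl N m l i - j i)%Z) x + 0)) /\
  snd (Cmult (psi d N G l x) (Cconj (phi d j x))) =
    RsumZd d (fun m => (/ sqrt (Gl1 d N G l) * G (mNl N m l)) * cos (dotZ d (fun i => (mNl N m l i - j i)%Z) x + - (PI / 2))).
Proof. intros Hg HG Hs. destruct (psi_conv d N G l x Hg HG Hs) as [Hc [Hsn _]].
  set (c := / sqrt (Gl1 d N G l)). set (tj := dotZ d j x).
  rewrite Cmult_fst, Cmult_snd. unfold Cconj, phi, cexpi. cbn [fst snd]. rewrite psi_fst, psi_snd. fold c tj.
  split; symmetry; apply RsumZd_is.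
  - apply (is_lim_seq_ext (fun n => c * boxsum d n (fun m => G (mNl N m l) * cos (dotZ d (mNl N m l) x)) * cos tj
       - c * boxsum d n (fun m => G (mNl N m l) * sin (dotZ d (mNl N m l) x)) * - sin tj)).
    intros n. rewrite (boxsum_ext_loc d n (fun m => c * G (mNl N m l) * cos (dotZ d (fun i => (mNl N m l i - j i)%Z) x + 0)) (fun m => (c * cos tj) * (G (mNl N m l) * cos (dotZ d (mNl N m l) x)) +
       (c * sin tj) * (G (mNl N m l) * sin (dotZ d (mNl N m l) x)))).
    rewrite boxsum_plus, !boxsum_scal. ring.
    intros m _. rewrite dotZ_lin. fold tj. rewrite Rplus_0_r, cos_minus. ring.
    apply is_lim_seq_minus'; apply lim_scal_r; apply lim_scal_l; auto.
  - apply (is_lim_seq_ext (fun n => c * boxsum d n (fun m => G (mNl N m l) * cos (dotZ d (mNl N m l) x)) * - sin tj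
       + c * boxsum d n (fun m => G (mNl N m l) * sin (dotZ d (mNl N m l) x)) * cos tj)).
    intros n. rewrite (boxsum_ext_loc d n (fun m => c * G (mNl N m l) * cos (dotZ d (fun i => (mNl N m l i - j i)%Z) x + - (PI / 2))) (fun m => (c * - sin tj) * (G (mNl N m l) * cos (dotZ d (mNl N m l) x)) +
       (c * cos tj) * (G (mNl N m l) * sin (dotZ d (mNl N m l) x)))).
    rewrite boxsum_plus, !boxsum_scal. ring.
    intros m _. rewrite dotZ_lin. fold tj. rewrite cos_minus_PI2, sin_minus. ring.
    apply is_lim_seq_plus'; apply lim_scal_r; apply lim_scal_l; auto.
Qed.

Lemma c_pos d N G l : 0 < Gl1 d N G l -> 0 < / sqrt (Gl1 d N G l).
Proof. intros H. apply Rinv_0_lt_compat. apply sqrt_lt_R0; auto. Qed.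

Lemma cb_summable d N G l : in_grid d N l -> (forall k, 0 <= G k) -> ex_finite_lim_seq (fun n => boxsum d n G) ->
  is_lim_seq (fun n => boxsum d n (fun m => / sqrt (Gl1 d N G l) * G (mNl N m l))) (/ sqrt (Gl1 d N G l) * Gl1 d N G l).
Proof. intros Hg HG Hs. destruct (Gl1_facts d N G l Hg HG Hs) as [Hb _].
  apply (is_lim_seq_ext (fun n => / sqrt (Gl1 d N G l) * boxsum d n (fun m => G (mNl N m l)))).
  intros; rewrite boxsum_scal; auto. apply lim_scal_l; auto. Qed.

Lemma psi_phi_int d N G l (j : nat -> Z) : in_grid d N l -> (forall k, 0 <= G k) -> ex_finite_lim_seq (fun n => boxsum d n G) ->
  0 < Gl1 d N G l ->
  Intg d (fun x => fst (Cmult (psi d N G l x) (Cconj (phi d j x)))) /\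
  tint d (fun x => fst (Cmult (psi d N G l x) (Cconj (phi d j x)))) =
    RsumZd d (fun m => / sqrt (Gl1 d N G l) * G (mNl N m l) * (if zb d (fun i => (mNl N m l i - j i)%Z) then 1 else 0)) /\
  Intg d (fun x => snd (Cmult (psi d N G l x) (Cconj (phi d j x)))) /\
  tint d (fun x => snd (Cmult (psi d N G l x) (Cconj (phi d j x)))) = 0.
Proof. intros Hg HG Hs Hpos. pose proof (c_pos d N G l Hpos) as Hc.
  assert (HA : forall m, Rabs (/ sqrt (Gl1 d N G l) * G (mNl N m l)) <= / sqrt (Gl1 d N G l) * G (mNl N m l)).
  { intros m. rewrite Rabs_pos_eq; [lra|]. apply Rmult_le_pos; auto; lra. }
  assert (Hex : ex_finite_lim_seq (fun n => boxsum d n (fun m => / sqrt (Gl1 d N G l) * G (mNl N m l)))).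
  { eexists; apply cb_summable; auto. }
  replace (fun x => fst (Cmult (psi d N G l x) (Cconj (phi d j x)))) with
    (fun x => RsumZd d (fun m => (/ sqrt (Gl1 d N G l) * G (mNl N m l)) * cos (dotZ d (fun i => (mNl N m l i - j i)%Z) x + 0)))
    by (apply functional_extensionality; intros x; symmetry; apply (PP d N G l j x); auto).
  replace (fun x => snd (Cmult (psi d N G l x) (Cconj (phi d j x)))) with
    (fun x => RsumZd d (fun m => (/ sqrt (Gl1 d N G l) * G (mNl N m l)) * cos (dotZ d (fun i => (mNl N m l i - j i)%Z) x + - (PI / 2))))
    by (apply functional_extensionality; intros x; symmetry; apply (PP d N G l j x); auto).
  destruct (TS_lemma d (fun m => / sqrt (Gl1 d N G l) * G (mNl N m l)) (fun m i => (mNl N m l i - j i)%Z) 0 _ HA Hex) as [H1 H2].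
  destruct (TS_lemma d (fun m => / sqrt (Gl1 d N G l) * G (mNl N m l)) (fun m i => (mNl N m l i - j i)%Z) (- (PI / 2)) _ HA Hex) as [H3 H4].
  repeat split; auto.
  - rewrite H2. rewrite cos_0. auto.
  - rewrite H4. rewrite cos_neg, cos_PI2. transitivity (RsumZd d (fun _ => 0)); [|apply RsumZd_0]. apply RsumZd_ext. intros; destruct zb; ring.
Qed.

Lemma psi_bound d N G l x : in_grid d N l -> (forall k, 0 <= G k) -> ex_finite_lim_seq (fun n => boxsum d n G) ->
  0 < Gl1 d N G l ->
  Rabs (fst (psi d N G l x)) <= / sqrt (Gl1 d N G l) * Gl1 d N G l /\
  Rabs (snd (psi d N G l x)) <= / sqrt (Gl1 d N G l) * Gl1 d N G l.
Proof. intros Hg HG Hs Hp. pose proof (c_pos _ _ _ _ Hp). destruct (psi_conv d N G l x Hg HG Hs) as [_ [_ [H1 H2]]].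
  rewrite psi_fst, psi_snd, !Rabs_mult, (Rabs_pos_eq (/ _)) by lra. split; apply Rmult_le_compat_l; lra. Qed.

Lemma psi_psi d N G l k : in_grid d N l -> in_grid d N k -> (forall k, 0 <= G k) -> ex_finite_lim_seq (fun n => boxsum d n G) ->
  0 < Gl1 d N G l -> 0 < Gl1 d N G k ->
  let V := fun m' => RsumZd d (fun m => / sqrt (Gl1 d N G l) * G (mNl N m l) *
                 (if zb d (fun i => (mNl N m l i - mNl N m' k i)%Z) then 1 else 0)) in
  Intg d (fun x => fst (Cmult (psi d N G l x) (Cconj (psi d N G k x)))) /\
  tint d (fun x => fst (Cmult (psi d N G l x) (Cconj (psi d N G k x)))) =
    RsumZd d (fun m' => / sqrt (Gl1 d N G k) * G (mNl N m' k) * V m') /\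
  is_lim_seq (fun n => boxsum d n (fun m' => / sqrt (Gl1 d N G k) * G (mNl N m' k) * V m'))
    (RsumZd d (fun m' => / sqrt (Gl1 d N G k) * G (mNl N m' k) * V m')) /\
  Intg d (fun x => snd (Cmult (psi d N G l x) (Cconj (psi d N G k x)))) /\
  tint d (fun x => snd (Cmult (psi d N G l x) (Cconj (psi d N G k x)))) = 0.
Proof. intros Hg Hk HG Hs Hpl Hpk V.
  pose proof (c_pos _ _ _ _ Hpl) as Hcl. pose proof (c_pos _ _ _ _ Hpk) as Hck.
  set (cl := / sqrt (Gl1 d N G l)) in *. set (ck := / sqrt (Gl1 d N G k)) in *.
  set (B := cl * Gl1 d N G l).
  set (A := fun m' => ck * G (mNl N m' k) * (2 * B)).
  assert (HAs : ex_finite_lim_seq (fun n => boxsum d n A)).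
  { exists (ck * Gl1 d N G k * (2 * B)). unfold A. apply (is_lim_seq_ext (fun n => boxsum d n (fun m => ck * G (mNl N m k)) * (2 * B))).
    intros n. rewrite Rmult_comm, <- boxsum_scal. apply boxsum_ext_loc; intros; ring. apply lim_scal_r. apply cb_summable; auto. }
  assert (Hck0 : forall m', 0 <= ck * G (mNl N m' k)) by (intros; apply Rmult_le_pos; auto; lra).
  set (F := fun m' x => fst (Cmult (psi d N G l x) (Cconj (phi d (mNl N m' k) x)))).
  set (S := fun m' x => snd (Cmult (psi d N G l x) (Cconj (phi d (mNl N m' k) x)))).
  assert (HFb : forall m' x, Rabs (F m' x) <= 2 * B /\ Rabs (S m' x) <= 2 * B).
  { intros m' x. unfold F, S. rewrite Cmult_fst, Cmult_snd. unfold Cconj, phi, cexpi. cbn [fst snd].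
    destruct (psi_bound d N G l x Hg HG Hs Hpl) as [H1 H2]. fold cl B in H1, H2.
    set (t := dotZ d (mNl N m' k) x).
    pose proof (abs_cos_le t). pose proof (abs_sin_le t).
    split; eapply Rle_trans; try apply Rabs_triang; rewrite ?Rabs_Ropp, ?Rabs_mult, ?Rabs_Ropp;
      (assert (Rabs (fst (psi d N G l x)) * Rabs (cos t) <= B) by (apply Rle_trans with (B * 1); [apply Rmult_le_compat; auto using Rabs_pos|lra]));
      (assert (Rabs (snd (psi d N G l x)) * Rabs (sin t) <= B) by (apply Rle_trans with (B * 1); [apply Rmult_le_compat; auto using Rabs_pos|lra]));
      (assert (Rabs (fst (psi d N G l x)) * Rabs (sin t) <= B) by (apply Rle_trans with (B * 1); [apply Rmult_le_compat; auto using Rabs_pos|lra]));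
      (assert (Rabs (snd (psi d N G l x)) * Rabs (cos t) <= B) by (apply Rle_trans with (B * 1); [apply Rmult_le_compat; auto using Rabs_pos|lra]));
      lra. }
  assert (Efst : forall x, fst (Cmult (psi d N G l x) (Cconj (psi d N G k x))) = RsumZd d (fun m' => ck * G (mNl N m' k) * F m' x)).
  { intros x. destruct (psi_conv d N G k x Hk HG Hs) as [Hc [Hsn _]]. symmetry. apply RsumZd_is.
    rewrite Cmult_fst. unfold Cconj. cbn [fst snd]. rewrite (psi_fst d N G k), (psi_snd d N G k). fold ck.
    apply (is_lim_seq_ext (fun n => fst (psi d N G l x) * (ck * boxsum d n (fun m => G (mNl N m k) * cos (dotZ d (mNl N m k) x)))
        - snd (psi d N G l x) * - (ck * boxsum d n (fun m => G (mNl N m k) * sin (dotZ d (mNl N m k) x))))).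
    - intros n. rewrite (boxsum_ext_loc d n (fun m' => ck * G (mNl N m' k) * F m' x) (fun m => (ck * fst (psi d N G l x)) * (G (mNl N m k) * cos (dotZ d (mNl N m k) x))
         + (ck * snd (psi d N G l x)) * (G (mNl N m k) * sin (dotZ d (mNl N m k) x)))).
      rewrite boxsum_plus, !boxsum_scal. ring.
      intros m _. unfold F. rewrite Cmult_fst. unfold Cconj, phi, cexpi. cbn [fst snd]. ring.
    - apply is_lim_seq_minus'. apply lim_scal_l, lim_scal_l; auto. apply lim_scal_l. apply (is_lim_seq_opp _ (ck * _)).
      apply lim_scal_l; auto. }
  assert (Esnd : forall x, snd (Cmult (psi d N G l x) (Cconj (psi d N G k x))) = RsumZd d (fun m' => ck * G (mNl N m' k) * S m' x)).
  { intros x. destruct (psi_conv d N G k x Hk HG Hs) as [Hc [Hsn _]]. symmetry. apply RsumZd_is.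
    rewrite Cmult_snd. unfold Cconj. cbn [fst snd]. rewrite (psi_fst d N G k), (psi_snd d N G k). fold ck.
    apply (is_lim_seq_ext (fun n => fst (psi d N G l x) * - (ck * boxsum d n (fun m => G (mNl N m k) * sin (dotZ d (mNl N m k) x)))
        + snd (psi d N G l x) * (ck * boxsum d n (fun m => G (mNl N m k) * cos (dotZ d (mNl N m k) x))))).
    - intros n. rewrite (boxsum_ext_loc d n (fun m' => ck * G (mNl N m' k) * S m' x) (fun m => (- ck * fst (psi d N G l x)) * (G (mNl N m k) * sin (dotZ d (mNl N m k) x))
         + (ck * snd (psi d N G l x)) * (G (mNl N m k) * cos (dotZ d (mNl N m k) x)))).
      rewrite boxsum_plus, !boxsum_scal. ring.
      intros m _. unfold S. rewrite Cmult_snd. unfold Cconj, phi, cexpi. cbn [fst snd]. ring.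
    - apply is_lim_seq_plus'. apply lim_scal_l. apply (is_lim_seq_opp _ (ck * _)).
      apply lim_scal_l; auto. apply lim_scal_l, lim_scal_l; auto. }
  replace (fun x => fst (Cmult (psi d N G l x) (Cconj (psi d N G k x)))) with
    (fun x => RsumZd d (fun m' => ck * G (mNl N m' k) * F m' x)) by (apply functional_extensionality; intros; auto).
  replace (fun x => snd (Cmult (psi d N G l x) (Cconj (psi d N G k x)))) with
    (fun x => RsumZd d (fun m' => ck * G (mNl N m' k) * S m' x)) by (apply functional_extensionality; intros; auto).
  assert (HuA : forall m' x, Rabs (ck * G (mNl N m' k) * F m' x) <= A m' /\ Rabs (ck * G (mNl N m' k) * S m' x) <= A m').
  { intros m' x. unfold A. rewrite !(Rabs_mult (ck * G (mNl N m' k))), !(Rabs_pos_eq (ck * G (mNl N m' k))) by auto.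
    split; apply Rmult_le_compat_l; auto; apply HFb. }
  destruct (Int_series d d (fun m' x => ck * G (mNl N m' k) * F m' x) A) as [I1 T1]; auto.
  { intros m'. apply Int_scal. apply (psi_phi_int d N G l (mNl N m' k) Hg HG Hs Hpl). }
  { intros; apply HuA. }
  destruct (Int_series d d (fun m' x => ck * G (mNl N m' k) * S m' x) A) as [I2 T2]; auto.
  { intros m'. apply Int_scal. apply (psi_phi_int d N G l (mNl N m' k) Hg HG Hs Hpl). }
  { intros; apply HuA. }
  assert (TF : forall m', tint d (fun x => ck * G (mNl N m' k) * F m' x) = ck * G (mNl N m' k) * V m').
  { intros m'. rewrite (proj2 (Int_scal _ _ _ (proj1 (psi_phi_int d N G l (mNl N m' k) Hg HG Hs Hpl)))).
    unfold F. rewrite (proj1 (proj2 (psi_phi_int d N G l (mNl N m' k) Hg HG Hs Hpl))). auto. }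
  assert (TS : forall m', tint d (fun x => ck * G (mNl N m' k) * S m' x) = 0).
  { intros m'. rewrite (proj2 (Int_scal _ _ _ (proj1 (proj2 (proj2 (psi_phi_int d N G l (mNl N m' k) Hg HG Hs Hpl)))))).
    unfold S. rewrite (proj2 (proj2 (proj2 (psi_phi_int d N G l (mNl N m' k) Hg HG Hs Hpl)))). ring. }
  split; [auto|]. split.
  { rewrite T1. apply RsumZd_ext. intros; apply TF. }
  split.
  { apply dom_conv_ex with A; auto. intros m'. rewrite <- TF. apply tint_bound.
    apply Int_scal. apply (psi_phi_int d N G l (mNl N m' k) Hg HG Hs Hpl). intros; apply HuA. }
  split; [auto|]. rewrite T2. rewrite (RsumZd_ext _ _ (fun _ => 0)) by (intros; apply TS). apply RsumZd_0.
Qed.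

Lemma zb_iff d v w : (forall i, (i < d)%nat -> (v i = 0%Z <-> w i = 0%Z)) -> zb d v = zb d w.
Proof. induction d; simpl; intros H; auto. rewrite IHd by (intros; apply H; lia).
  destruct (Z.eqb_spec (v d) 0), (Z.eqb_spec (w d) 0); auto; exfalso; specialize (H d ltac:(lia)); tauto. Qed.

Lemma congb_spec d N l k : congb d N l k = true <-> forall i, (i < d)%nat -> ((k i - Z.of_nat (l i)) mod Z.of_nat N = 0)%Z.
Proof. induction d; simpl; split; intros H; auto. lia.
  - apply andb_prop in H. destruct H as [H1 H2]. intros i Hi. destruct (Nat.eq_dec i d). subst. apply Z.eqb_eq; auto.
    apply IHd; auto. lia.
  - rewrite (proj2 IHd) by (intros; apply H; lia). rewrite (proj2 (Z.eqb_eq _ _)) by (apply H; lia). auto. Qed.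

Lemma mNl_loc N m m' l d : (forall i, (i < d)%nat -> m i = m' i) -> forall i, (i < d)%nat -> mNl N m l i = mNl N m' l i.
Proof. intros H i Hi. unfold mNl. rewrite H; auto. Qed.

Lemma W_val d N G l k : in_grid d N l -> (forall k k', (forall i, (i < d)%nat -> k i = k' i) -> G k = G k') ->
  forall c, RsumZd d (fun m => c * G (mNl N m l) * (if zb d (fun i => (mNl N m l i - k i)%Z) then 1 else 0)) =
  if congb d N l k then c * G k else 0.
Proof. intros Hg HGl c. destruct (congb d N l k) eqn:Ec.
  - rewrite congb_spec in Ec. set (m0 := fun i => ((k i - Z.of_nat (l i)) / Z.of_nat N)%Z).
    assert (HN : forall i, (i < d)%nat -> (0 < N)%nat) by (intros i Hi; destruct Hg as [Hl _]; specialize (Hl i Hi); lia).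
    assert (Hm0 : forall i, (i < d)%nat -> (k i - Z.of_nat (l i) = Z.of_nat N * m0 i)%Z).
    { intros i Hi. apply Z.div_exact. specialize (HN i Hi); lia. apply Ec; auto. }
    rewrite (RsumZd_ext _ _ (fun m => if zb d (fun i => (m i - m0 i)%Z) then c * G (mNl N m l) * 1 else 0)).
    + rewrite RsumZd_delta. rewrite Rmult_1_r. f_equal. apply HGl. intros i Hi. unfold mNl. specialize (Hm0 i Hi). lia.
      intros m m' Hmm. f_equal. f_equal. apply HGl. apply mNl_loc; auto.
    + intros m. rewrite (zb_iff d _ (fun i => (m i - m0 i)%Z)). destruct zb; ring.
      intros i Hi. specialize (Hm0 i Hi). specialize (HN i Hi). unfold mNl. split; intros; nia.
  - assert (exists i, (i < d)%nat /\ ((k i - Z.of_nat (l i)) mod Z.of_nat N <> 0)%Z).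
    { destruct (Classical_Prop.classic (exists i, (i < d)%nat /\ ((k i - Z.of_nat (l i)) mod Z.of_nat N <> 0)%Z)) as [H|H]; auto.
      exfalso. assert (congb d N l k = true). apply congb_spec. intros i Hi.
      destruct (Z.eq_dec ((k i - Z.of_nat (l i)) mod Z.of_nat N) 0); auto. exfalso; apply H; exists i; auto.
      congruence. }
    destruct H as [i [Hi Hm]].
    transitivity (RsumZd d (fun _ => 0)); [|apply RsumZd_0]. apply RsumZd_ext. intros m.
    rewrite (zb_false d _ i Hi). ring. unfold mNl. intros E. apply Hm.
    replace (k i - Z.of_nat (l i))%Z with (m i * Z.of_nat N)%Z by lia. apply Z_mod_mult.
Qed.

Lemma Hnorm_claim d N G l : in_grid d N l -> (forall k, 0 <= G k) -> ex_finite_lim_seq (fun n => boxsum d n G) ->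
  (forall k k', (forall i, (i < d)%nat -> k i = k' i) -> G k = G k') -> 0 < Gl1 d N G l ->
  Hnorm d G (psi d N G l) = 1.
Proof. intros Hg HG Hs HGl Hp. unfold Hnorm.
  set (c := / sqrt (Gl1 d N G l)).
  rewrite (RsumZd_ext _ _ (fun k => c * c * (if congb d N l k then G k else 0))).
  - destruct (Gl1_facts d N G l Hg HG Hs) as [_ E].
    rewrite (RsumZd_is d _ (c * c * RsumZd d (fun k => if congb d N l k then G k else 0))).
    rewrite <- E. unfold c. rewrite <- Rinv_mult, sqrt_sqrt by lra. rewrite Rinv_l by lra. apply sqrt_1.
    apply (is_lim_seq_ext (fun n => c * c * boxsum d n (fun k => if congb d N l k then G k else 0))).
    intros; rewrite boxsum_scal; auto. apply lim_scal_l. apply dom_conv_ex with G; auto.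
    intros k; destruct congb; [rewrite Rabs_pos_eq; auto; lra|rewrite Rabs_R0; auto].
  - intros k. unfold L2ip, Ctint, Re, Im.
    destruct (psi_phi_int d N G l k) as [_ [T1 [_ T2]]]; auto.
    rewrite T1, T2. fold c. rewrite (W_val d N G l k Hg HGl c).
    unfold Cmod. cbn [fst snd]. rewrite pow2_sqrt by (apply Rplus_le_le_0_compat; apply pow2_ge_0).
    destruct congb. 2:{ unfold Rdiv; ring. }
    destruct (Req_dec (G k) 0) as [Z|Z]. rewrite Z. unfold Rdiv. rewrite Rinv_0. ring. field; auto.
Qed.

Lemma L2norm_claim d N G l : in_grid d N l -> (forall k, 0 <= G k) -> ex_finite_lim_seq (fun n => boxsum d n G) ->
  (forall k k', (forall i, (i < d)%nat -> k i = k' i) -> G k = G k') -> 0 < Gl1 d N G l ->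
  L2norm d (psi d N G l) = Gl2 d N G l / sqrt (Gl1 d N G l).
Proof. intros Hg HG Hs HGl Hp.
  destruct (psi_psi d N G l l Hg Hg HG Hs Hp Hp) as [_ [T1 [Hc _]]].
  pose proof (c_pos _ _ _ _ Hp) as Hcp. set (c := / sqrt (Gl1 d N G l)) in *.
  assert (HV : forall m', RsumZd d (fun m => c * G (mNl N m l) * (if zb d (fun i => (mNl N m l i - mNl N m' l i)%Z) then 1 else 0))
     = c * G (mNl N m' l)).
  { intros m'. rewrite (RsumZd_ext _ _ (fun m => if zb d (fun i => (m i - m' i)%Z) then c * G (mNl N m l) * 1 else 0)).
    rewrite RsumZd_delta. ring. intros m1 m2 H. f_equal. f_equal. apply HGl. apply mNl_loc; auto.
    intros m. rewrite (zb_iff d _ (fun i => (m i - m' i)%Z)). destruct zb; ring.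
    intros i Hi. destruct Hg as [Hl _]. specialize (Hl i Hi). unfold mNl. split; intros; nia. }
  rewrite (RsumZd_ext _ _ (fun m' => c * G (mNl N m' l) * (c * G (mNl N m' l)))) in T1, Hc by (intros; rewrite HV; auto).
  apply (is_lim_seq_ext _ (fun n => boxsum d n (fun m' => c * G (mNl N m' l) * (c * G (mNl N m' l))))) in Hc.
  2:{ intros n. apply boxsum_ext_loc. intros; rewrite HV; auto. }
  set (X := RsumZd d (fun m' => c * G (mNl N m' l) * (c * G (mNl N m' l)))) in *.
  unfold L2norm.
  replace (fun x => Cmod (psi d N G l x) ^ 2) with (fun x => fst (Cmult (psi d N G l x) (Cconj (psi d N G l x)))).
  2:{ apply functional_extensionality; intros x. unfold Cmod. rewrite pow2_sqrt by (apply Rplus_le_le_0_compat; apply pow2_ge_0).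
      rewrite Cmult_fst. unfold Cconj; cbn [fst snd]. ring. }
  rewrite T1.
  assert (HX : RsumZd d (fun m => Rabs (G (mNl N m l)) ^ 2) = / (c * c) * X).
  { apply RsumZd_is. apply (is_lim_seq_ext (fun n => / (c * c) * boxsum d n (fun m' => c * G (mNl N m' l) * (c * G (mNl N m' l))))).
    intros n. rewrite <- boxsum_scal. apply boxsum_ext_loc. intros m _. rewrite Rabs_pos_eq by auto. field. lra.
    apply lim_scal_l; auto. }
  unfold Gl2. rewrite HX. fold c.
  assert (0 <= X).
  { apply (lim_le_real (fun _ => 0) (fun n => boxsum d n (fun m' => c * G (mNl N m' l) * (c * G (mNl N m' l)))) 0 X); auto.
    intros n. apply boxsum_nonneg. intros m. pose proof (HG (mNl N m l)). apply Rmult_le_pos; apply Rmult_le_pos; lra.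
    apply is_lim_seq_const. }
  rewrite sqrt_mult_alt. rewrite sqrt_inv. replace (c * c) with (c ^ 2) by ring. rewrite sqrt_pow2 by lra.
  unfold c. assert (0 < sqrt (Gl1 d N G l)) by (apply sqrt_lt_R0; auto). field. lra.
  apply Rlt_le, Rinv_0_lt_compat. nra.
Qed.

Lemma ortho_claim d N G l k : in_grid d N l -> in_grid d N k -> (forall k, 0 <= G k) -> ex_finite_lim_seq (fun n => boxsum d n G) ->
  0 < Gl1 d N G l -> 0 < Gl1 d N G k -> (exists i, (i < d)%nat /\ k i <> l i) ->
  L2ip d (psi d N G l) (psi d N G k) = RtoC 0.
Proof. intros Hg Hk HG Hs Hpl Hpk [i0 [Hi0 Hne]].
  destruct (psi_psi d N G l k Hg Hk HG Hs Hpl Hpk) as [_ [T1 [_ [_ T2]]]].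
  unfold L2ip, Ctint, Re, Im, RtoC. rewrite T1, T2. f_equal.
  transitivity (RsumZd d (fun _ => 0)); [|apply RsumZd_0]. apply RsumZd_ext. intros m'.
  transitivity (/ sqrt (Gl1 d N G k) * G (mNl N m' k) * RsumZd d (fun _ => 0)); [|rewrite RsumZd_0; ring].
  f_equal. apply RsumZd_ext. intros m. rewrite (zb_false d _ i0 Hi0). ring.
  unfold mNl. destruct Hg as [Hl _], Hk as [Hk' _]. specialize (Hl i0 Hi0). specialize (Hk' i0 Hi0).
  intros E. apply Hne.
  assert (E2 : ((m i0 - m' i0) * Z.of_nat N = Z.of_nat (k i0) - Z.of_nat (l i0))%Z) by lia.
  destruct (Z.eq_dec (m i0 - m' i0) 0) as [Z0|Z0]. rewrite Z0 in E2. lia.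
  destruct (Z_lt_le_dec (m i0 - m' i0) 0); nia.
Qed.


Theorem lemma13 (d N : nat) (g : (nat -> R) -> R) (M : nat -> nat -> R)
  (G : (nat -> Z) -> R)
  (hN : Nat.Even N)
  (hG_fourier : forall k : nat -> Z,
     RtoC (G k) = Ctint d (fun th => Cmult (RtoC (g (matvec d M th))) (cexpi (- dotZ d k th))))
  (hG_nonneg : forall k : nat -> Z, 0 <= G k)
  (hG_summable : ex_finite_lim_seq (fun n => boxsum d n G))
  (hK_expansion : forall th : nat -> R, in_torus d th ->
     RtoC (g (matvec d M th)) = CsumZd d (fun k => Cmult (RtoC (G k)) (phi d k th)))
  (hK_invertible : kernel_matrix_invertible d N (kern d g M)) :
  forall l : nat -> nat, in_grid d N l ->
    (forall x : nat -> R,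
        TK d N (kern d g M) (psi d N G l) x = Cmult (RtoC (Gl1 d N G l)) (psi d N G l x))
    /\ Hnorm d G (psi d N G l) = 1
    /\ L2norm d (psi d N G l) = Gl2 d N G l / sqrt (Gl1 d N G l)
    /\ (forall k : nat -> nat, in_grid d N k -> (exists i, (i < d)%nat /\ k i <> l i) ->
          L2ip d (psi d N G l) (psi d N G k) = RtoC 0).
Proof.
  intros l Hl.
  pose proof (G_loc d g M G hG_fourier) as HGl.
  pose proof (K_repr d g M G hK_expansion) as HK.
  pose proof (Gl1_pos d N g M G l hN Hl hG_nonneg hG_summable HK hK_invertible) as Hpl.
  split; [|split; [|split]].
  - intros x. apply TK_claim; auto.
  - apply Hnorm_claim; auto.
  - apply L2norm_claim; auto.
  - intros k Hk Hne. apply ortho_claim; auto.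
    apply (Gl1_pos d N g M G k hN Hk hG_nonneg hG_summable HK hK_invertible).
Qed.
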